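(* There exists a binary linear $[690,659,3]_2 4$ code (length $690$, codimension $31$, minimum distance $3$, covering radius $4$). Consequently $\ell_2(31,4)\le690$.
   Context: $[n,n-r,d]_2R$: binary linear code of length $n$, codimension $r$, minimum distance $d$, covering radius $R$ (smallest $R$ such that every vector of $\mathbb{F}_2^r$ is a sum of at most $R$ columns of a parity-check matrix). $\ell_2(r,R)$ is the smallest length of a binary linear code of codimension $r$ and covering radius $R$. *)

(* Defs.v *)
From mathcomp Require Import all_boot all_algebra.
Set Implicit Arguments. Unset Strict Implicit. Unset Printing Implicit Defensive.
Import GRing.Theory.
Local Open Scope ring_scope.

(* A binary linear code of length n and codimension r is given by a
   parity-check matrix H : 'M['F_2]_(r, n) of full row rank r;
   the code is { c : 'cV_n | H *m c = 0 }. *)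

Definition wt n (c : 'cV['F_2]_n) : nat := #|[set j | c j 0 != 0]|.

Definition min_dist r n (H : 'M['F_2]_(r, n)) (d : nat) : Prop :=
  (exists c : 'cV['F_2]_n, H *m c = 0 /\ c != 0 /\ wt c = d) /\
  (forall c : 'cV['F_2]_n, H *m c = 0 -> c != 0 -> (d <= wt c)%N).

Definition sum_of_at_most r n (H : 'M['F_2]_(r, n)) (R : nat) (s : 'cV['F_2]_r) : Prop :=
  exists S : {set 'I_n}, (#|S| <= R)%N /\ s = \sum_(j in S) col j H.

Definition covering_radius r n (H : 'M['F_2]_(r, n)) (R : nat) : Prop :=
  (forall s, sum_of_at_most H R s) /\
  (forall R', (forall s, sum_of_at_most H R' s) -> (R <= R')%N).

Definition is_code (n r d R : nat) : Prop :=
  exists H : 'M['F_2]_(r, n), \rank H = r /\ min_dist H d /\ covering_radius H R.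

(* Main.v *)
Require Import Defs.
From mathcomp Require Import all_boot all_algebra.
From mathcomp Require Import finfield.
From mathcomp Require Import zify.
Set Implicit Arguments. Unset Strict Implicit. Unset Printing Implicit Defensive.
Import GRing.Theory.

Inductive trie := TLeaf of seq nat | TNode of trie & trie.
Fixpoint lookup (t : trie) (l : seq bool) : seq nat :=
  match t, l with
  | TLeaf J, _ => J
  | TNode t0 t1, b :: l' => lookup (if b then t1 else t0) l'
  | TNode _ _, [::] => [::]
  end.
Definition xorl (a b : seq bool) := mkseq (fun i => nth false a i (+) nth false b i) 11.
Definition labl : seq (seq bool) := [:: [:: true; true; true; false; false; true; false; false; true; true; true];
  [:: true; true; true; false; true; false; false; false; true; false; false];
  [:: false; false; true; true; false; true; false; true; true; false; false];
  [:: true; false; true; false; false; false; false; false; false; true; true];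
  [:: false; true; false; false; true; true; true; true; false; true; true];
  [:: true; false; false; true; false; true; false; false; true; true; false];
  [:: false; false; true; true; true; false; true; true; true; true; false];
  [:: true; false; true; false; true; false; false; false; true; false; true];
  [:: false; false; true; true; false; false; true; false; false; false; true];
  [:: false; true; true; false; false; true; false; true; false; false; true];
  [:: false; true; false; true; false; true; false; false; false; true; true];
  [:: true; false; false; true; true; false; true; true; false; false; true];
  [:: true; true; true; false; false; true; true; false; false; false; false];
  [:: false; false; false; false; true; true; true; false; true; false; true];
  [:: false; true; true; false; false; true; false; false; false; true; true];
  [:: false; true; false; false; false; true; false; false; true; false; true];
  [:: true; true; true; false; false; true; true; false; false; true; false];
  [:: false; true; false; false; false; true; false; false; false; true; true];
  [:: false; false; false; true; true; false; false; false; false; false; true];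
  [:: true; false; false; true; false; false; false; true; true; false; false];
  [:: true; false; true; true; false; true; true; false; true; false; false]].
Definition tbl : trie := (TNode (TNode (TNode (TNode (TNode (TNode (TNode (TNode (TNode (TNode (TNode (TLeaf [:: 0; 7; 10; 18]) (TLeaf [:: 2; 9; 12; 20])) (TNode (TLeaf [:: 4; 8; 9; 18]) (TLeaf [:: 0; 6; 11; 17]))) (TNode (TNode (TLeaf [:: 1; 2; 6; 16]) (TLeaf [:: 0; 6; 11; 15])) (TNode (TLeaf [:: 1; 2; 6; 12]) (TLeaf [:: 1; 6; 9; 20])))) (TNode (TNode (TNode (TLeaf [:: 0; 2; 5; 15]) (TLeaf [:: 1; 5; 11; 16])) (TNode (TLeaf [:: 1; 5; 9; 18]) (TLeaf [:: 1; 5; 11; 12]))) (TNode (TNode (TLeaf [:: 8; 16; 17; 19]) (TLeaf [:: 1; 6; 14; 20])) (TNode (TLeaf [:: 0; 2; 5; 17]) (TLeaf [:: 1; 4; 7; 13]))))) (TNode (TNode (TNode (TNode (TLeaf [:: 2; 7; 13; 19]) (TLeaf [:: 0; 1; 2; 6])) (TNode (TLeaf [:: 1; 2; 11; 17]) (TLeaf [:: 0; 15; 16; 17]))) (TNode (TNode (TLeaf [:: 0; 4; 8; 11]) (TLeaf [:: 6; 9; 17; 18])) (TNode (TLeaf [:: 0; 2; 9; 20]) (TLeaf [:: 1; 3; 13; 15])))) (TNode (TNode (TNode (TLeaf [:: 3; 4; 7; 15]) (TLeaf [:: 0; 8; 17; 19])) (TNode (TLeaf [:: 6; 8; 11; 19])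 (TLeaf [:: 2; 5; 16; 17]))) (TNode (TNode (TLeaf [:: 0; 1; 5; 11]) (TLeaf [:: 0; 9; 12; 14])) (TNode (TLeaf [:: 3; 4; 7; 17]) (TLeaf [:: 0; 8; 15; 19])))))) (TNode (TNode (TNode (TNode (TNode (TLeaf [:: 1; 9; 18; 19]) (TLeaf [:: 0; 8; 14; 20])) (TNode (TLeaf [:: 0; 2; 15; 19]) (TLeaf [:: 1; 11; 16; 19]))) (TNode (TNode (TLeaf [:: 0; 2; 17; 19]) (TLeaf [:: 0; 1; 3; 7])) (TNode (TLeaf [:: 1; 10; 13; 20]) (TLeaf [:: 2; 6; 11; 19])))) (TNode (TNode (TNode (TLeaf [:: 0; 2; 8; 16]) (TLeaf [:: 0; 2; 4; 11])) (TNode (TLeaf [:: 0; 2; 8; 12]) (TLeaf [:: 0; 8; 9; 20]))) (TNode (TNode (TLeaf [:: 0; 1; 6; 8]) (TLeaf [:: 7; 8; 13; 19])) (TNode (TLeaf [:: 1; 4; 16; 17]) (TLeaf [:: 1; 8; 11; 17]))))) (TNode (TNode (TNode (TNode (TLeaf [:: 1; 3; 7; 16]) (TLeaf [:: 2; 16; 17; 19])) (TNode (TLeaf [:: 0; 7; 13; 15]) (TLeaf [:: 0; 5; 8; 17]))) (TNode (TNode (TLeaf [:: 0; 7; 13; 17]) (TLeaf [:: 0; 5; 8; 15])) (TNode (TLeaf [:: 0; 1; 11; 19]) (TLeaf [:: 2; 8; 9; 14])))) (TNode (TNode (TNode (TLeaf [:: 1; 4; 6; 11]) (TLeaf [:: 1;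 6; 8; 16])) (TNode (TLeaf [:: 2; 5; 7; 13]) (TLeaf [:: 0; 1; 4; 17]))) (TNode (TNode (TLeaf [:: 2; 4; 11; 16]) (TLeaf [:: 0; 1; 4; 15])) (TNode (TLeaf [:: 2; 4; 11; 12]) (TLeaf [:: 0; 5; 16; 19]))))))) (TNode (TNode (TNode (TNode (TNode (TNode (TLeaf [:: 0; 11; 16; 19]) (TLeaf [:: 0; 4; 8; 19])) (TNode (TLeaf [:: 0; 11; 12; 19]) (TLeaf [:: 0; 9; 18; 19]))) (TNode (TNode (TLeaf [:: 3; 7; 12; 16]) (TLeaf [:: 0; 10; 13; 20])) (TNode (TLeaf [:: 0; 3; 10; 18]) (TLeaf [:: 1; 2; 17; 19])))) (TNode (TNode (TNode (TLeaf [:: 1; 8; 9; 20]) (TLeaf [:: 0; 1; 5; 19])) (TNode (TLeaf [:: 0; 8; 11; 15]) (TLeaf [:: 0; 4; 15; 16]))) (TNode (TNode (TLeaf [:: 0; 8; 11; 17]) (TLeaf [:: 0; 4; 16; 17])) (TNode (TLeaf [:: 4; 6; 11; 16]) (TLeaf [:: 0; 4; 12; 17]))))) (TNode (TNode (TNode (TNode (TLeaf [:: 0; 6; 15; 19]) (TLeaf [:: 0; 3; 7; 12])) (TNode (TLeaf [:: 4; 9; 14; 17]) (TLeaf [:: 0; 3; 7; 16]))) (TNode (TNode (TLeaf [:: 4; 8; 16; 19]) (TLeaf [:: 2; 18; 19; 20])) (TNode (TLeaf [:: 0; 2; 4; 5]) (TLeaf [:: 1; 7; 13; 17])))) (TNode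 (TNode (TNode (TLeaf [:: 0; 6; 8; 12]) (TLeaf [:: 2; 10; 13; 14])) (TNode (TLeaf [:: 0; 6; 8; 16]) (TLeaf [:: 0; 4; 6; 11]))) (TNode (TNode (TLeaf [:: 1; 5; 16; 19]) (TLeaf [:: 8; 11; 12; 15])) (TNode (TLeaf [:: 0; 1; 2; 8]) (TLeaf [:: 8; 11; 15; 16])))))) (TNode (TNode (TNode (TNode (TNode (TLeaf [:: 1; 6; 11; 17]) (TLeaf [:: 0; 1; 12; 16])) (TNode (TLeaf [:: 2; 11; 15; 16]) (TLeaf [:: 0; 5; 14; 18]))) (TNode (TNode (TLeaf [:: 0; 6; 9; 20]) (TLeaf [:: 0; 1; 15; 17])) (TNode (TLeaf [:: 1; 6; 11; 15]) (TLeaf [:: 0; 2; 6; 16])))) (TNode (TNode (TNode (TLeaf [:: 0; 5; 11; 12]) (TLeaf [:: 0; 1; 9; 14])) (TNode (TLeaf [:: 0; 5; 11; 16]) (TLeaf [:: 0; 4; 5; 8]))) (TNode (TNode (TLeaf [:: 0; 4; 7; 13]) (TLeaf [:: 1; 2; 5; 17])) (TNode (TLeaf [:: 0; 6; 14; 20]) (TLeaf [:: 3; 4; 10; 20]))))) (TNode (TNode (TNode (TNode (TLeaf [:: 1; 15; 16; 17]) (TLeaf [:: 0; 2; 11; 17])) (TNode (TLeaf [:: 0; 3; 13; 17]) (TLeaf [:: 6; 9; 12; 20]))) (TNode (TNode (TLeaf [:: 0; 3; 13; 15]) (TLeaf [:: 1; 2; 9; 20])) (TNode (TLeaf [:: 5;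 14; 16; 18]) (TLeaf [:: 0; 2; 11; 15])))) (TNode (TNode (TNode (TLeaf [:: 2; 6; 9; 14]) (TLeaf [:: 4; 7; 13; 16])) (TNode (TLeaf [:: 0; 5; 6; 15]) (TLeaf [:: 2; 3; 7; 8]))) (TNode (TNode (TLeaf [:: 0; 2; 4; 19]) (TLeaf [:: 5; 11; 12; 16])) (TNode (TLeaf [:: 1; 9; 12; 14]) (TLeaf [:: 1; 2; 14; 20])))))))) (TNode (TNode (TNode (TNode (TNode (TNode (TNode (TLeaf [:: 0; 7; 17; 18]) (TLeaf [:: 2; 4; 13; 14])) (TNode (TLeaf [:: 3; 4; 11; 14]) (TLeaf [:: 0; 6; 10; 11]))) (TNode (TNode (TLeaf [:: 1; 2; 7; 9]) (TLeaf [:: 1; 7; 12; 20])) (TNode (TLeaf [:: 0; 7; 15; 18]) (TLeaf [:: 1; 7; 16; 20])))) (TNode (TNode (TNode (TLeaf [:: 3; 4; 9; 11]) (TLeaf [:: 2; 8; 13; 18])) (TNode (TLeaf [:: 2; 3; 8; 20]) (TLeaf [:: 2; 4; 9; 13]))) (TNode (TNode (TLeaf [:: 8; 10; 16; 19]) (TLeaf [:: 4; 10; 11; 19])) (TNode (TLeaf [:: 0; 2; 5; 10]) (TLeaf [:: 3; 14; 17; 19]))))) (TNode (TNode (TNode (TNode (TLeaf [:: 3; 6; 18; 19]) (TLeaf [:: 0; 10; 12; 15])) (TNode (TLeaf [:: 0; 1; 7; 20]) (TLeaf [:: 0; 10; 15; 16]))) (TNode (TNode (TLeaf [:: 1; 9;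 13; 19]) (TLeaf [:: 0; 6; 7; 9])) (TNode (TLeaf [:: 0; 3; 8; 14]) (TLeaf [:: 0; 10; 12; 17])))) (TNode (TNode (TNode (TLeaf [:: 5; 9; 10; 20]) (TLeaf [:: 0; 8; 10; 19])) (TNode (TLeaf [:: 7; 11; 14; 15]) (TLeaf [:: 2; 5; 10; 16]))) (TNode (TNode (TLeaf [:: 0; 3; 8; 9]) (TLeaf [:: 0; 4; 13; 20])) (TNode (TLeaf [:: 0; 3; 4; 18]) (TLeaf [:: 0; 6; 7; 14])))))) (TNode (TNode (TNode (TNode (TNode (TLeaf [:: 0; 3; 12; 20]) (TLeaf [:: 0; 2; 3; 9])) (TNode (TLeaf [:: 0; 3; 16; 20]) (TLeaf [:: 0; 12; 13; 18]))) (TNode (TNode (TLeaf [:: 0; 2; 10; 19]) (TLeaf [:: 1; 3; 17; 18])) (TNode (TLeaf [:: 1; 13; 17; 20]) (TLeaf [:: 4; 5; 10; 11])))) (TNode (TNode (TNode (TLeaf [:: 0; 11; 13; 14]) (TLeaf [:: 3; 5; 9; 15])) (TNode (TLeaf [:: 2; 4; 6; 10]) (TLeaf [:: 0; 2; 3; 14]))) (TNode (TNode (TLeaf [:: 1; 4; 10; 12]) (TLeaf [:: 6; 13; 14; 15])) (TNode (TLeaf [:: 1; 4; 10; 16]) (TLeaf [:: 1; 8; 10; 11]))))) (TNode (TNode (TNode (TNode (TLeaf [:: 1; 3; 6; 9]) (TLeaf [:: 2; 10; 16; 19])) (TNode (TLeaf [:: 9; 10; 19; 20]) (TLeaf [::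 0; 5; 8; 10]))) (TNode (TNode (TLeaf [:: 0; 7; 10; 13]) (TLeaf [:: 1; 6; 10; 19])) (TNode (TLeaf [:: 2; 3; 9; 12]) (TLeaf [:: 2; 3; 11; 18])))) (TNode (TNode (TNode (TLeaf [:: 10; 14; 19; 20]) (TLeaf [:: 1; 7; 8; 9])) (TNode (TLeaf [:: 1; 3; 6; 14]) (TLeaf [:: 0; 1; 4; 10]))) (TNode (TNode (TLeaf [:: 2; 3; 12; 14]) (TLeaf [:: 2; 8; 10; 17])) (TNode (TLeaf [:: 1; 5; 9; 13]) (TLeaf [:: 11; 12; 13; 14]))))))) (TNode (TNode (TNode (TNode (TNode (TNode (TLeaf [:: 0; 3; 15; 18]) (TLeaf [:: 1; 3; 16; 20])) (TNode (TLeaf [:: 1; 2; 3; 9]) (TLeaf [:: 0; 13; 15; 20]))) (TNode (TNode (TLeaf [:: 3; 6; 9; 12]) (TLeaf [:: 0; 13; 17; 20])) (TNode (TLeaf [:: 0; 3; 17; 18]) (TLeaf [:: 1; 2; 10; 19])))) (TNode (TNode (TNode (TLeaf [:: 1; 2; 3; 14]) (TLeaf [:: 6; 8; 10; 15])) (TNode (TLeaf [:: 5; 9; 12; 13]) (TLeaf [:: 1; 11; 13; 14]))) (TNode (TNode (TLeaf [:: 0; 8; 10; 11]) (TLeaf [:: 0; 4; 10; 16])) (TNode (TLeaf [:: 3; 6; 12; 14]) (TLeaf [:: 0; 4; 10; 12]))))) (TNode (TNode (TNode (TNode (TLeaf [:: 0; 7; 8; 14]) (TLeaf [:: 3; 12;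 17; 18])) (TNode (TLeaf [:: 4; 9; 10; 14]) (TLeaf [:: 0; 3; 6; 9]))) (TNode (TNode (TLeaf [:: 0; 1; 3; 20]) (TLeaf [:: 2; 9; 13; 15])) (TNode (TLeaf [:: 0; 6; 10; 19]) (TLeaf [:: 0; 1; 13; 18])))) (TNode (TNode (TNode (TLeaf [:: 0; 4; 7; 18]) (TLeaf [:: 0; 3; 6; 14])) (TNode (TLeaf [:: 0; 7; 8; 9]) (TLeaf [:: 5; 7; 19; 20]))) (TNode (TNode (TLeaf [:: 3; 11; 14; 15]) (TLeaf [:: 0; 5; 9; 13])) (TNode (TLeaf [:: 4; 10; 15; 17]) (TLeaf [:: 2; 13; 14; 15])))))) (TNode (TNode (TNode (TNode (TNode (TLeaf [:: 1; 6; 10; 11]) (TLeaf [:: 2; 13; 19; 20])) (TNode (TLeaf [:: 2; 3; 18; 19]) (TLeaf [:: 0; 1; 10; 17]))) (TNode (TNode (TLeaf [:: 0; 7; 16; 20]) (TLeaf [:: 0; 1; 10; 15])) (TNode (TLeaf [:: 0; 7; 12; 20]) (TLeaf [:: 0; 2; 7; 9])))) (TNode (TNode (TNode (TLeaf [:: 8; 9; 13; 15]) (TLeaf [:: 3; 4; 15; 20])) (TNode (TLeaf [:: 4; 13; 15; 18]) (TLeaf [:: 5; 6; 10; 12]))) (TNode (TNode (TLeaf [:: 4; 13; 17; 18]) (TLeaf [:: 0; 2; 7; 14])) (TNode (TLeaf [:: 8; 9; 13; 17]) (TLeaf [:: 3; 4; 17; 20]))))) (TNode (TNode (TNode (TNode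 (TLeaf [:: 1; 10; 15; 16]) (TLeaf [:: 0; 2; 10; 11])) (TNode (TLeaf [:: 0; 3; 10; 13]) (TLeaf [:: 4; 6; 13; 14]))) (TNode (TNode (TLeaf [:: 1; 10; 12; 17]) (TLeaf [:: 1; 3; 8; 14])) (TNode (TLeaf [:: 1; 6; 7; 9]) (TLeaf [:: 0; 9; 13; 19])))) (TNode (TNode (TNode (TLeaf [:: 2; 7; 14; 16]) (TLeaf [:: 4; 6; 9; 13])) (TNode (TLeaf [:: 1; 8; 10; 19]) (TLeaf [:: 6; 8; 13; 18]))) (TNode (TNode (TLeaf [:: 0; 5; 6; 10]) (TLeaf [:: 0; 13; 14; 19])) (TNode (TLeaf [:: 1; 4; 13; 20]) (TLeaf [:: 1; 3; 8; 9]))))))))) (TNode (TNode (TNode (TNode (TNode (TNode (TNode (TNode (TLeaf [:: 1; 5; 17; 18]) (TLeaf [:: 2; 4; 10; 13])) (TNode (TLeaf [:: 3; 4; 10; 11]) (TLeaf [:: 0; 6; 11; 14]))) (TNode (TNode (TLeaf [:: 0; 2; 5; 9]) (TLeaf [:: 0; 5; 12; 20])) (TNode (TLeaf [:: 1; 5; 15; 18]) (TLeaf [:: 0; 5; 16; 20])))) (TNode (TNode (TNode (TLeaf [:: 0; 6; 12; 18]) (TLeaf [:: 0; 6; 9; 11])) (TNode (TLeaf [:: 0; 6; 16; 18]) (TLeaf [:: 1; 6; 15; 20]))) (TNode (TNode (TLeaf [:: 8; 14; 16; 19]) (TLeaf [:: 1; 6; 17; 20])) (TNode (TLeaf [:: 0;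 1; 2; 18]) (TLeaf [:: 2; 15; 16; 20]))))) (TNode (TNode (TNode (TNode (TLeaf [:: 5; 12; 16; 20]) (TLeaf [:: 0; 4; 18; 19])) (TNode (TLeaf [:: 1; 2; 11; 14]) (TLeaf [:: 0; 8; 9; 19]))) (TNode (TNode (TLeaf [:: 3; 4; 7; 9]) (TLeaf [:: 0; 14; 16; 17])) (TNode (TLeaf [:: 0; 3; 8; 10]) (TLeaf [:: 0; 12; 14; 17])))) (TNode (TNode (TNode (TLeaf [:: 1; 2; 9; 11]) (TLeaf [:: 0; 8; 14; 19])) (TNode (TLeaf [:: 0; 2; 15; 20]) (TLeaf [:: 0; 9; 12; 15]))) (TNode (TNode (TLeaf [:: 0; 2; 17; 20]) (TLeaf [:: 0; 9; 12; 17])) (TNode (TLeaf [:: 1; 10; 13; 19]) (TLeaf [:: 0; 6; 7; 10])))))) (TNode (TNode (TNode (TNode (TNode (TLeaf [:: 2; 4; 6; 9]) (TLeaf [:: 0; 8; 17; 20])) (TNode (TLeaf [:: 2; 6; 8; 18]) (TLeaf [:: 3; 5; 10; 15]))) (TNode (TNode (TLeaf [:: 0; 2; 14; 19]) (TLeaf [:: 1; 8; 9; 11])) (TNode (TLeaf [:: 1; 4; 9; 12]) (TLeaf [:: 0; 8; 15; 20])))) (TNode (TNode (TNode (TLeaf [:: 0; 10; 11; 13]) (TLeaf [:: 7; 9; 12; 13])) (TNode (TLeaf [:: 1; 17; 18; 19]) (TLeaf [:: 0; 2; 3; 10]))) (TNode (TNode (TLeaf [:: 1; 4; 12; 14]) (TLeaf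 [:: 0; 16; 19; 20])) (TNode (TLeaf [:: 0; 2; 9; 19]) (TLeaf [:: 0; 12; 19; 20]))))) (TNode (TNode (TNode (TNode (TLeaf [:: 8; 12; 15; 20]) (TLeaf [:: 0; 1; 4; 9])) (TNode (TLeaf [:: 8; 15; 16; 20]) (TLeaf [:: 0; 1; 8; 18]))) (TNode (TNode (TLeaf [:: 0; 7; 13; 14]) (TLeaf [:: 1; 6; 14; 19])) (TNode (TLeaf [:: 0; 4; 6; 20]) (TLeaf [:: 2; 8; 9; 17])))) (TNode (TNode (TNode (TLeaf [:: 2; 11; 18; 19]) (TLeaf [:: 0; 5; 8; 9])) (TNode (TLeaf [:: 1; 3; 6; 10]) (TLeaf [:: 0; 1; 4; 14]))) (TNode (TNode (TLeaf [:: 2; 3; 10; 12]) (TLeaf [:: 2; 8; 14; 17])) (TNode (TLeaf [:: 0; 7; 9; 13]) (TLeaf [:: 1; 6; 9; 19]))))))) (TNode (TNode (TNode (TNode (TNode (TNode (TLeaf [:: 3; 7; 14; 15]) (TLeaf [:: 4; 6; 15; 18])) (TNode (TLeaf [:: 1; 8; 17; 20]) (TLeaf [:: 6; 8; 9; 15]))) (TNode (TNode (TLeaf [:: 0; 2; 4; 20]) (TLeaf [:: 0; 4; 9; 12])) (TNode (TLeaf [:: 0; 8; 9; 11]) (TLeaf [:: 0; 4; 9; 16])))) (TNode (TNode (TNode (TLeaf [:: 1; 2; 3; 10]) (TLeaf [:: 0; 17; 18; 19])) (TNode (TLeaf [:: 2; 6; 19; 20]) (TLeaf [:: 1; 10;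 11; 13]))) (TNode (TNode (TLeaf [:: 0; 8; 11; 14]) (TLeaf [:: 0; 4; 14; 16])) (TNode (TLeaf [:: 1; 16; 19; 20]) (TLeaf [:: 0; 4; 12; 14]))))) (TNode (TNode (TNode (TNode (TLeaf [:: 0; 7; 8; 10]) (TLeaf [:: 2; 4; 16; 20])) (TNode (TLeaf [:: 8; 12; 16; 18]) (TLeaf [:: 2; 4; 12; 20]))) (TNode (TNode (TLeaf [:: 3; 5; 7; 20]) (TLeaf [:: 1; 4; 6; 20])) (TNode (TLeaf [:: 0; 6; 14; 19]) (TLeaf [:: 0; 5; 10; 13])))) (TNode (TNode (TNode (TLeaf [:: 1; 4; 5; 18]) (TLeaf [:: 0; 3; 6; 10])) (TNode (TLeaf [:: 1; 5; 8; 9]) (TLeaf [:: 0; 1; 19; 20]))) (TNode (TNode (TLeaf [:: 0; 6; 9; 19]) (TLeaf [:: 1; 7; 9; 13])) (TNode (TLeaf [:: 4; 14; 15; 17]) (TLeaf [:: 2; 10; 13; 15])))))) (TNode (TNode (TNode (TNode (TNode (TLeaf [:: 1; 6; 11; 14]) (TLeaf [:: 5; 6; 9; 12])) (TNode (TLeaf [:: 8; 10; 13; 15]) (TLeaf [:: 0; 1; 14; 17]))) (TNode (TNode (TLeaf [:: 1; 5; 16; 20]) (TLeaf [:: 0; 1; 14; 15])) (TNode (TLeaf [:: 1; 5; 12; 20]) (TLeaf [:: 1; 2; 5; 9])))) (TNode (TNode (TNode (TLeaf [:: 0; 6; 15; 20]) (TLeaf [:: 0; 1; 9; 17])) (TNode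 (TLeaf [:: 1; 6; 9; 11]) (TLeaf [:: 1; 6; 12; 18]))) (TNode (TNode (TLeaf [:: 2; 9; 11; 12]) (TLeaf [:: 0; 2; 7; 10])) (TNode (TLeaf [:: 0; 6; 17; 20]) (TLeaf [:: 0; 1; 9; 15]))))) (TNode (TNode (TNode (TNode (TLeaf [:: 1; 8; 9; 19]) (TLeaf [:: 0; 1; 5; 20])) (TNode (TLeaf [:: 0; 3; 13; 14]) (TLeaf [:: 4; 6; 10; 13]))) (TNode (TNode (TLeaf [:: 1; 12; 14; 17]) (TLeaf [:: 1; 3; 8; 10])) (TNode (TLeaf [:: 0; 5; 6; 9]) (TLeaf [:: 6; 8; 19; 20])))) (TNode (TNode (TNode (TLeaf [:: 0; 2; 16; 18]) (TLeaf [:: 0; 4; 8; 20])) (TNode (TLeaf [:: 0; 2; 12; 18]) (TLeaf [:: 0; 2; 9; 11]))) (TNode (TNode (TLeaf [:: 0; 1; 6; 18]) (TLeaf [:: 0; 10; 13; 19])) (TNode (TLeaf [:: 1; 9; 12; 17]) (TLeaf [:: 1; 2; 17; 20])))))))) (TNode (TNode (TNode (TNode (TNode (TNode (TNode (TLeaf [:: 0; 1; 5; 7]) (TLeaf [:: 0; 3; 4; 6])) (TNode (TLeaf [:: 3; 4; 11; 17]) (TLeaf [:: 3; 8; 16; 17]))) (TNode (TNode (TLeaf [:: 3; 4; 11; 15]) (TLeaf [:: 3; 8; 15; 16])) (TNode (TLeaf [:: 6; 7; 8; 19]) (TLeaf [:: 0; 1; 8; 13])))) (TNode (TNode (TNode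 (TLeaf [:: 0; 4; 7; 8]) (TLeaf [:: 0; 7; 11; 16])) (TNode (TLeaf [:: 0; 7; 9; 18]) (TLeaf [:: 0; 7; 11; 12]))) (TNode (TNode (TLeaf [:: 2; 11; 13; 19]) (TLeaf [:: 1; 6; 10; 20])) (TNode (TLeaf [:: 1; 2; 7; 17]) (TLeaf [:: 0; 4; 5; 13]))))) (TNode (TNode (TNode (TNode (TLeaf [:: 0; 3; 8; 15]) (TLeaf [:: 2; 5; 6; 7])) (TNode (TLeaf [:: 1; 8; 13; 16]) (TLeaf [:: 1; 4; 11; 13]))) (TNode (TNode (TLeaf [:: 3; 4; 6; 16]) (TLeaf [:: 0; 10; 14; 16])) (TNode (TLeaf [:: 0; 3; 8; 17]) (TLeaf [:: 0; 10; 12; 14])))) (TNode (TNode (TNode (TLeaf [:: 0; 3; 12; 19]) (TLeaf [:: 0; 6; 7; 15])) (TNode (TLeaf [:: 0; 3; 16; 19]) (TLeaf [:: 5; 8; 11; 13]))) (TNode (TNode (TLeaf [:: 0; 2; 10; 20]) (TLeaf [:: 0; 9; 10; 12])) (TNode (TLeaf [:: 1; 13; 17; 19]) (TLeaf [:: 0; 6; 7; 17])))))) (TNode (TNode (TNode (TNode (TNode (TLeaf [:: 2; 4; 7; 16]) (TLeaf [:: 0; 8; 10; 20])) (TNode (TLeaf [:: 2; 4; 7; 12]) (TLeaf [:: 3; 5; 15; 17]))) (TNode (TNode (TLeaf [:: 1; 4; 6; 7]) (TLeaf [:: 0; 4; 13; 19])) (TNode (TLeaf [:: 1; 13; 14;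 20]) (TLeaf [:: 3; 5; 12; 16])))) (TNode (TNode (TNode (TLeaf [:: 0; 11; 13; 17]) (TLeaf [:: 4; 7; 14; 20])) (TNode (TLeaf [:: 0; 1; 7; 19]) (TLeaf [:: 0; 2; 3; 17]))) (TNode (TNode (TLeaf [:: 1; 3; 11; 16]) (TLeaf [:: 0; 2; 3; 15])) (TNode (TLeaf [:: 0; 11; 13; 15]) (TLeaf [:: 1; 2; 13; 16]))))) (TNode (TNode (TNode (TNode (TLeaf [:: 0; 3; 5; 16]) (TLeaf [:: 3; 14; 15; 20])) (TNode (TLeaf [:: 0; 3; 5; 12]) (TLeaf [:: 1; 7; 8; 17]))) (TNode (TNode (TLeaf [:: 1; 5; 13; 17]) (TLeaf [:: 0; 2; 4; 7])) (TNode (TLeaf [:: 5; 7; 11; 19]) (TLeaf [:: 2; 8; 9; 10])))) (TNode (TNode (TNode (TLeaf [:: 2; 3; 15; 16]) (TLeaf [:: 0; 1; 3; 11])) (TNode (TLeaf [:: 0; 1; 2; 13]) (TLeaf [:: 2; 6; 7; 19]))) (TNode (TNode (TLeaf [:: 0; 6; 12; 13]) (TLeaf [:: 1; 7; 12; 19])) (TNode (TLeaf [:: 0; 6; 13; 16]) (TLeaf [:: 1; 7; 16; 19]))))))) (TNode (TNode (TNode (TNode (TNode (TNode (TLeaf [:: 3; 6; 8; 19]) (TLeaf [:: 7; 8; 12; 15])) (TNode (TLeaf [:: 1; 8; 10; 20]) (TLeaf [:: 7; 8; 15; 16]))) (TNode (TNode (TLeaf [:: 4; 7; 11; 17]) (TLeaf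 [:: 0; 13; 14; 20])) (TNode (TLeaf [:: 0; 1; 3; 5]) (TLeaf [:: 0; 4; 6; 7])))) (TNode (TNode (TNode (TLeaf [:: 0; 1; 6; 13]) (TLeaf [:: 0; 10; 18; 19])) (TNode (TLeaf [:: 3; 6; 15; 16]) (TLeaf [:: 1; 11; 13; 17]))) (TNode (TNode (TLeaf [:: 0; 2; 13; 16]) (TLeaf [:: 0; 3; 11; 12])) (TNode (TLeaf [:: 0; 2; 12; 13]) (TLeaf [:: 0; 3; 11; 16]))))) (TNode (TNode (TNode (TNode (TLeaf [:: 0; 7; 8; 17]) (TLeaf [:: 0; 5; 13; 15])) (TNode (TLeaf [:: 4; 6; 7; 16]) (TLeaf [:: 1; 3; 5; 16]))) (TNode (TNode (TLeaf [:: 4; 9; 10; 15]) (TLeaf [:: 10; 11; 14; 19])) (TNode (TLeaf [:: 0; 7; 8; 15]) (TLeaf [:: 0; 5; 13; 17])))) (TNode (TNode (TNode (TLeaf [:: 3; 11; 12; 16]) (TLeaf [:: 0; 3; 6; 17])) (TNode (TLeaf [:: 2; 3; 18; 20]) (TLeaf [:: 2; 12; 13; 16]))) (TNode (TNode (TLeaf [:: 0; 7; 16; 19]) (TLeaf [:: 1; 6; 13; 16])) (TNode (TLeaf [:: 0; 7; 12; 19]) (TLeaf [:: 0; 3; 6; 15])))))) (TNode (TNode (TNode (TNode (TNode (TLeaf [:: 4; 10; 19; 20]) (TLeaf [:: 5; 7; 12; 16])) (TNode (TLeaf [:: 1; 3; 4; 6]) (TLeaf [:: 0; 1; 10; 14])))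 (TNode (TNode (TLeaf [:: 2; 3; 4; 12]) (TLeaf [:: 3; 4; 9; 20])) (TNode (TLeaf [:: 2; 3; 4; 16]) (TLeaf [:: 2; 3; 8; 11])))) (TNode (TNode (TNode (TLeaf [:: 1; 7; 11; 12]) (TLeaf [:: 0; 1; 9; 10])) (TNode (TLeaf [:: 1; 7; 11; 16]) (TLeaf [:: 0; 2; 7; 15]))) (TNode (TNode (TLeaf [:: 0; 1; 3; 19]) (TLeaf [:: 0; 2; 7; 17])) (TNode (TLeaf [:: 0; 6; 10; 20]) (TLeaf [:: 3; 4; 14; 20]))))) (TNode (TNode (TNode (TNode (TLeaf [:: 0; 4; 11; 13]) (TLeaf [:: 0; 8; 13; 16])) (TNode (TLeaf [:: 2; 6; 10; 14]) (TLeaf [:: 0; 2; 3; 4]))) (TNode (TNode (TLeaf [:: 0; 5; 7; 12]) (TLeaf [:: 1; 3; 8; 17])) (TNode (TLeaf [:: 0; 5; 7; 16]) (TLeaf [:: 7; 14; 15; 20])))) (TNode (TNode (TNode (TLeaf [:: 2; 6; 9; 10]) (TLeaf [:: 1; 3; 16; 19])) (TNode (TLeaf [:: 1; 6; 7; 15]) (TLeaf [:: 0; 13; 15; 19]))) (TNode (TNode (TLeaf [:: 1; 6; 7; 17]) (TLeaf [:: 0; 13; 17; 19])) (TNode (TLeaf [:: 1; 9; 10; 12]) (TLeaf [:: 0; 1; 7; 11])))))))))) (TNode (TNode (TNode (TNode (TNode (TNode (TNode (TNode (TNode (TLeaf [:: 0; 6; 13; 19]) (TLeaf [:: 0; 1;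 10; 18])) (TNode (TLeaf [:: 10; 12; 15; 20]) (TLeaf [:: 1; 7; 12; 16]))) (TNode (TNode (TLeaf [:: 4; 9; 13; 14]) (TLeaf [:: 2; 6; 7; 16])) (TNode (TLeaf [:: 1; 5; 8; 13]) (TLeaf [:: 1; 7; 15; 17])))) (TNode (TNode (TNode (TLeaf [:: 1; 3; 6; 8]) (TLeaf [:: 2; 10; 14; 15])) (TNode (TLeaf [:: 5; 7; 11; 12]) (TLeaf [:: 0; 5; 9; 10]))) (TNode (TNode (TLeaf [:: 2; 3; 8; 16]) (TLeaf [:: 2; 3; 4; 11])) (TNode (TLeaf [:: 0; 3; 5; 19]) (TLeaf [:: 2; 10; 14; 17]))))) (TNode (TNode (TNode (TNode (TLeaf [:: 0; 2; 6; 7]) (TLeaf [:: 1; 2; 13; 19])) (TNode (TLeaf [:: 1; 3; 11; 19]) (TLeaf [:: 0; 10; 17; 20]))) (TNode (TNode (TLeaf [:: 0; 1; 7; 16]) (TLeaf [:: 0; 10; 15; 20])) (TNode (TLeaf [:: 0; 1; 7; 12]) (TLeaf [:: 1; 9; 10; 11])))) (TNode (TNode (TNode (TLeaf [:: 5; 6; 7; 15]) (TLeaf [:: 0; 2; 3; 8])) (TNode (TLeaf [:: 0; 8; 11; 13]) (TLeaf [:: 0; 4; 13; 16]))) (TNode (TNode (TLeaf [:: 5; 9; 10; 12]) (TLeaf [:: 0; 5; 7; 11])) (TNode (TLeaf [:: 2; 4; 7; 19]) (TLeaf [:: 1; 3; 4; 17])))))) (TNode (TNode (TNode (TNode (TNode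 (TLeaf [:: 1; 13; 16; 17]) (TLeaf [:: 0; 9; 10; 19])) (TNode (TLeaf [:: 0; 3; 15; 17]) (TLeaf [:: 4; 7; 8; 19]))) (TNode (TNode (TLeaf [:: 1; 12; 13; 15]) (TLeaf [:: 4; 6; 10; 14])) (TNode (TLeaf [:: 0; 3; 12; 16]) (TLeaf [:: 0; 2; 11; 13])))) (TNode (TNode (TNode (TLeaf [:: 1; 4; 10; 20]) (TLeaf [:: 4; 7; 15; 16])) (TNode (TLeaf [:: 0; 5; 6; 13]) (TLeaf [:: 0; 10; 14; 19]))) (TNode (TNode (TLeaf [:: 1; 8; 13; 19]) (TLeaf [:: 0; 6; 7; 8])) (TNode (TLeaf [:: 0; 3; 9; 14]) (TLeaf [:: 4; 6; 9; 10]))))) (TNode (TNode (TNode (TNode (TLeaf [:: 2; 11; 12; 13]) (TLeaf [:: 2; 9; 13; 18])) (TNode (TLeaf [:: 2; 3; 9; 20]) (TLeaf [:: 0; 1; 13; 15]))) (TNode (TNode (TLeaf [:: 2; 4; 5; 7]) (TLeaf [:: 0; 1; 13; 17])) (TNode (TLeaf [:: 1; 6; 11; 13]) (TLeaf [:: 0; 7; 11; 19])))) (TNode (TNode (TNode (TLeaf [:: 1; 3; 5; 11]) (TLeaf [:: 3; 9; 12; 14])) (TNode (TLeaf [:: 0; 4; 7; 17]) (TLeaf [:: 1; 2; 5; 13]))) (TNode (TNode (TLeaf [:: 0; 4; 7; 15]) (TLeaf [:: 3; 8; 17; 19])) (TNode (TLeaf [:: 8; 9; 10; 15]) (TLeaf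 [:: 5; 6; 13; 16]))))))) (TNode (TNode (TNode (TNode (TNode (TNode (TLeaf [:: 2; 7; 15; 19]) (TLeaf [:: 0; 12; 13; 17])) (TNode (TLeaf [:: 1; 9; 10; 19]) (TLeaf [:: 0; 13; 16; 17]))) (TNode (TNode (TLeaf [:: 1; 2; 11; 13]) (TLeaf [:: 0; 13; 15; 16])) (TNode (TLeaf [:: 2; 7; 17; 19]) (TLeaf [:: 0; 12; 13; 15])))) (TNode (TNode (TNode (TLeaf [:: 0; 5; 7; 19]) (TLeaf [:: 1; 5; 6; 13])) (TNode (TLeaf [:: 2; 7; 8; 16]) (TLeaf [:: 0; 4; 10; 20]))) (TNode (TNode (TLeaf [:: 3; 5; 11; 12]) (TLeaf [:: 1; 3; 9; 14])) (TNode (TLeaf [:: 1; 6; 7; 8]) (TLeaf [:: 0; 8; 13; 19]))))) (TNode (TNode (TNode (TNode (TLeaf [:: 0; 1; 3; 12]) (TLeaf [:: 5; 7; 8; 17])) (TNode (TLeaf [:: 0; 1; 3; 16]) (TLeaf [:: 2; 3; 11; 15]))) (TNode (TNode (TLeaf [:: 1; 7; 11; 19]) (TLeaf [:: 0; 6; 11; 13])) (TNode (TLeaf [:: 0; 2; 3; 6]) (TLeaf [:: 2; 4; 10; 14])))) (TNode (TNode (TNode (TLeaf [:: 0; 2; 5; 13]) (TLeaf [:: 1; 4; 7; 17])) (TNode (TLeaf [:: 8; 13; 16; 19]) (TLeaf [:: 0; 3; 5; 11]))) (TNode (TNode (TLeaf [:: 4; 10; 12; 20]) (TLeaf [:: 2;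 4; 9; 10])) (TNode (TLeaf [:: 3; 5; 6; 15]) (TLeaf [:: 0; 2; 7; 8])))))) (TNode (TNode (TNode (TNode (TNode (TLeaf [:: 0; 7; 12; 16]) (TLeaf [:: 3; 10; 13; 20])) (TNode (TLeaf [:: 1; 5; 10; 14]) (TLeaf [:: 1; 6; 13; 19]))) (TNode (TNode (TLeaf [:: 0; 7; 15; 17]) (TLeaf [:: 0; 5; 8; 13])) (TNode (TLeaf [:: 3; 11; 12; 19]) (TLeaf [:: 2; 13; 16; 19])))) (TNode (TNode (TNode (TLeaf [:: 0; 7; 9; 14]) (TLeaf [:: 3; 4; 16; 17])) (TNode (TLeaf [:: 2; 5; 7; 15]) (TLeaf [:: 0; 3; 6; 8]))) (TNode (TNode (TLeaf [:: 2; 5; 7; 17]) (TLeaf [:: 0; 1; 4; 13])) (TNode (TLeaf [:: 3; 8; 11; 15]) (TLeaf [:: 3; 4; 15; 16]))))) (TNode (TNode (TNode (TNode (TLeaf [:: 1; 10; 17; 20]) (TLeaf [:: 0; 3; 11; 19])) (TNode (TLeaf [:: 0; 2; 13; 19]) (TLeaf [:: 1; 2; 6; 7]))) (TNode (TNode (TLeaf [:: 0; 9; 10; 11]) (TLeaf [:: 0; 10; 12; 18])) (TNode (TLeaf [:: 1; 10; 15; 20]) (TLeaf [:: 0; 10; 16; 18])))) (TNode (TNode (TNode (TLeaf [:: 1; 4; 13; 16]) (TLeaf [:: 1; 8; 11; 13])) (TNode (TLeaf [:: 0; 3; 4; 15]) (TLeaf [:: 6; 10; 14; 15]))) (TNode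 (TNode (TLeaf [:: 0; 3; 4; 17]) (TLeaf [:: 6; 10; 14; 17])) (TNode (TLeaf [:: 0; 10; 11; 14]) (TLeaf [:: 3; 4; 6; 11])))))))) (TNode (TNode (TNode (TNode (TNode (TNode (TNode (TLeaf [:: 2; 3; 10; 19]) (TLeaf [:: 0; 1; 17; 18])) (TNode (TLeaf [:: 1; 2; 6; 20]) (TLeaf [:: 1; 6; 9; 12]))) (TNode (TNode (TLeaf [:: 2; 11; 12; 18]) (TLeaf [:: 3; 13; 16; 18])) (TNode (TLeaf [:: 2; 11; 16; 18]) (TLeaf [:: 0; 1; 15; 18])))) (TNode (TNode (TNode (TLeaf [:: 4; 10; 13; 15]) (TLeaf [:: 1; 6; 12; 14])) (TNode (TLeaf [:: 8; 17; 19; 20]) (TLeaf [:: 0; 5; 9; 17]))) (TNode (TNode (TLeaf [:: 3; 11; 13; 14]) (TLeaf [:: 0; 5; 9; 15])) (TNode (TLeaf [:: 4; 10; 13; 17]) (TLeaf [:: 1; 2; 5; 18]))))) (TNode (TNode (TNode (TNode (TLeaf [:: 0; 2; 9; 16]) (TLeaf [:: 0; 12; 16; 20])) (TNode (TLeaf [:: 0; 2; 9; 12]) (TLeaf [:: 0; 2; 11; 18]))) (TNode (TNode (TLeaf [:: 0; 1; 6; 9]) (TLeaf [:: 0; 15; 17; 20])) (TNode (TLeaf [:: 1; 12; 17; 18]) (TLeaf [:: 1; 9; 11; 17])))) (TNode (TNode (TNode (TLeaf [:: 0; 2; 12; 14]) (TLeaf [:: 0; 9; 14; 20])) (TNode (TLeaf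 [:: 0; 2; 14; 16]) (TLeaf [:: 1; 11; 14; 15]))) (TNode (TNode (TLeaf [:: 5; 9; 12; 17]) (TLeaf [:: 1; 11; 14; 17])) (TNode (TLeaf [:: 0; 1; 6; 14]) (TLeaf [:: 1; 3; 4; 10])))))) (TNode (TNode (TNode (TNode (TNode (TLeaf [:: 1; 10; 13; 16]) (TLeaf [:: 0; 9; 17; 19])) (TNode (TLeaf [:: 0; 3; 10; 15]) (TLeaf [:: 4; 6; 14; 15]))) (TNode (TNode (TLeaf [:: 0; 3; 10; 17]) (TLeaf [:: 0; 8; 12; 14])) (TNode (TLeaf [:: 0; 4; 11; 14]) (TLeaf [:: 0; 8; 14; 16])))) (TNode (TNode (TNode (TLeaf [:: 1; 4; 17; 20]) (TLeaf [:: 4; 6; 9; 15])) (TNode (TLeaf [:: 2; 3; 5; 10]) (TLeaf [:: 0; 14; 17; 19]))) (TNode (TNode (TLeaf [:: 0; 4; 9; 11]) (TLeaf [:: 0; 4; 12; 18])) (TNode (TLeaf [:: 0; 2; 8; 20]) (TLeaf [:: 0; 4; 16; 18]))))) (TNode (TNode (TNode (TNode (TLeaf [:: 1; 4; 5; 9]) (TLeaf [:: 2; 15; 19; 20])) (TNode (TLeaf [:: 1; 5; 8; 18]) (TLeaf [:: 3; 10; 12; 17]))) (TNode (TNode (TLeaf [:: 0; 6; 18; 19]) (TLeaf [:: 0; 1; 10; 13])) (TNode (TLeaf [:: 1; 3; 7; 20]) (TLeaf [:: 2; 17; 19; 20])))) (TNode (TNode (TNode (TLeaf [:: 4; 12;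 16; 18]) (TLeaf [:: 0; 5; 19; 20])) (TNode (TLeaf [:: 0; 4; 7; 10]) (TLeaf [:: 2; 8; 16; 20]))) (TNode (TNode (TLeaf [:: 4; 15; 17; 18]) (TLeaf [:: 3; 8; 10; 19])) (TNode (TLeaf [:: 8; 9; 15; 17]) (TLeaf [:: 1; 6; 8; 20]))))))) (TNode (TNode (TNode (TNode (TNode (TNode (TLeaf [:: 2; 6; 8; 14]) (TLeaf [:: 0; 10; 12; 13])) (TNode (TLeaf [:: 1; 9; 17; 19]) (TLeaf [:: 0; 10; 13; 16]))) (TNode (TNode (TLeaf [:: 1; 8; 14; 16]) (TLeaf [:: 1; 4; 11; 14])) (TNode (TLeaf [:: 0; 2; 18; 19]) (TLeaf [:: 1; 3; 10; 17])))) (TNode (TNode (TNode (TLeaf [:: 1; 14; 17; 19]) (TLeaf [:: 2; 3; 7; 14])) (TNode (TLeaf [:: 2; 6; 8; 9]) (TLeaf [:: 0; 4; 17; 20]))) (TNode (TNode (TLeaf [:: 1; 4; 16; 18]) (TLeaf [:: 0; 4; 15; 20])) (TNode (TLeaf [:: 1; 4; 12; 18]) (TLeaf [:: 1; 4; 9; 11]))))) (TNode (TNode (TNode (TNode (TLeaf [:: 2; 9; 11; 19]) (TLeaf [:: 0; 1; 8; 14])) (TNode (TLeaf [:: 4; 8; 19; 20]) (TLeaf [:: 0; 4; 5; 9]))) (TNode (TNode (TLeaf [:: 10; 12; 13; 16]) (TLeaf [:: 0; 3; 7; 20])) (TNode (TLeaf [:: 0; 7; 13; 18]) (TLeaf [::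 1; 6; 18; 19])))) (TNode (TNode (TNode (TLeaf [:: 3; 5; 6; 10]) (TLeaf [:: 0; 1; 4; 18])) (TNode (TLeaf [:: 1; 5; 19; 20]) (TLeaf [:: 0; 1; 8; 9]))) (TNode (TNode (TLeaf [:: 0; 6; 8; 20]) (TLeaf [:: 2; 4; 9; 17])) (TNode (TLeaf [:: 4; 16; 17; 20]) (TLeaf [:: 2; 8; 17; 18])))))) (TNode (TNode (TNode (TNode (TNode (TLeaf [:: 0; 6; 9; 12]) (TLeaf [:: 0; 2; 6; 20])) (TNode (TLeaf [:: 0; 6; 9; 16]) (TLeaf [:: 9; 11; 12; 17]))) (TNode (TNode (TLeaf [:: 0; 7; 10; 15]) (TLeaf [:: 0; 1; 16; 20])) (TNode (TLeaf [:: 0; 1; 2; 9]) (TLeaf [:: 0; 1; 12; 20])))) (TNode (TNode (TNode (TLeaf [:: 0; 6; 14; 16]) (TLeaf [:: 3; 4; 10; 16])) (TNode (TLeaf [:: 0; 6; 12; 14]) (TLeaf [:: 2; 8; 10; 13]))) (TNode (TNode (TLeaf [:: 0; 1; 2; 14]) (TLeaf [:: 8; 9; 11; 19])) (TNode (TLeaf [:: 1; 5; 9; 15]) (TLeaf [:: 2; 4; 19; 20]))))) (TNode (TNode (TNode (TNode (TLeaf [:: 1; 2; 11; 18]) (TLeaf [:: 0; 15; 16; 18])) (TNode (TLeaf [:: 0; 9; 11; 15]) (TLeaf [:: 0; 4; 14; 19]))) (TNode (TNode (TLeaf [:: 0; 9; 11; 17]) (TLeaf [:: 0; 12; 17; 18]))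 (TNode (TLeaf [:: 1; 15; 17; 20]) (TLeaf [:: 0; 16; 17; 18])))) (TNode (TNode (TNode (TLeaf [:: 0; 11; 14; 15]) (TLeaf [:: 0; 4; 9; 19])) (TNode (TLeaf [:: 1; 9; 14; 20]) (TLeaf [:: 0; 8; 18; 19]))) (TNode (TNode (TLeaf [:: 0; 3; 4; 10]) (TLeaf [:: 1; 5; 6; 18])) (TNode (TLeaf [:: 0; 11; 14; 17]) (TLeaf [:: 4; 7; 13; 20]))))))))) (TNode (TNode (TNode (TNode (TNode (TNode (TNode (TNode (TLeaf [:: 2; 3; 14; 19]) (TLeaf [:: 0; 5; 10; 17])) (TNode (TLeaf [:: 4; 9; 13; 15]) (TLeaf [:: 3; 8; 15; 20]))) (TNode (TNode (TLeaf [:: 4; 9; 13; 17]) (TLeaf [:: 2; 9; 10; 14])) (TNode (TLeaf [:: 8; 13; 17; 18]) (TLeaf [:: 0; 5; 10; 15])))) (TNode (TNode (TNode (TLeaf [:: 4; 13; 14; 15]) (TLeaf [:: 1; 6; 10; 12])) (TNode (TLeaf [:: 2; 3; 9; 19]) (TLeaf [:: 1; 6; 10; 16]))) (TNode (TNode (TLeaf [:: 3; 10; 11; 13]) (TLeaf [:: 1; 7; 9; 15])) (TNode (TLeaf [:: 4; 13; 14; 17]) (TLeaf [:: 0; 2; 7; 18]))))) (TNode (TNode (TNode (TNode (TLeaf [:: 1; 4; 10; 19]) (TLeaf [:: 4; 6; 13; 18])) (TNode (TLeaf [:: 3; 4; 6; 20]) (TLeaf [:: 0; 10; 14; 20])))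 (TNode (TNode (TLeaf [:: 1; 8; 13; 20]) (TLeaf [:: 1; 3; 4; 9])) (TNode (TLeaf [:: 5; 10; 12; 17]) (TLeaf [:: 1; 3; 8; 18])))) (TNode (TNode (TNode (TLeaf [:: 0; 2; 10; 12]) (TLeaf [:: 0; 9; 10; 20])) (TNode (TLeaf [:: 0; 2; 10; 16]) (TLeaf [:: 1; 10; 11; 15]))) (TNode (TNode (TLeaf [:: 0; 3; 19; 20]) (TLeaf [:: 1; 10; 11; 17])) (TNode (TLeaf [:: 0; 1; 6; 10]) (TLeaf [:: 0; 13; 18; 19])))))) (TNode (TNode (TNode (TNode (TNode (TLeaf [:: 1; 13; 14; 16]) (TLeaf [:: 3; 5; 12; 20])) (TNode (TLeaf [:: 0; 3; 14; 15]) (TLeaf [:: 3; 5; 16; 20]))) (TNode (TNode (TLeaf [:: 0; 3; 14; 17]) (TLeaf [:: 0; 8; 10; 12])) (TNode (TLeaf [:: 0; 4; 10; 11]) (TLeaf [:: 0; 8; 10; 16])))) (TNode (TNode (TNode (TLeaf [:: 0; 3; 9; 15]) (TLeaf [:: 1; 2; 13; 20])) (TNode (TLeaf [:: 1; 2; 3; 18]) (TLeaf [:: 0; 10; 17; 19]))) (TNode (TNode (TLeaf [:: 3; 6; 12; 18]) (TLeaf [:: 0; 10; 15; 19])) (TNode (TLeaf [:: 0; 3; 9; 17]) (TLeaf [:: 4; 7; 14; 16]))))) (TNode (TNode (TNode (TNode (TLeaf [:: 0; 4; 7; 9]) (TLeaf [:: 3; 14; 16; 17])) (TNode (TLeaf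 [:: 0; 7; 8; 18]) (TLeaf [:: 3; 12; 14; 17]))) (TNode (TNode (TLeaf [:: 6; 7; 14; 19]) (TLeaf [:: 0; 1; 13; 14])) (TNode (TLeaf [:: 0; 3; 5; 20]) (TLeaf [:: 3; 8; 9; 19])))) (TNode (TNode (TNode (TLeaf [:: 0; 6; 13; 20]) (TLeaf [:: 1; 7; 19; 20])) (TNode (TLeaf [:: 0; 4; 7; 14]) (TLeaf [:: 0; 3; 6; 18]))) (TNode (TNode (TLeaf [:: 10; 12; 17; 19]) (TLeaf [:: 2; 13; 15; 18])) (TNode (TLeaf [:: 2; 3; 15; 20]) (TLeaf [:: 0; 1; 9; 13]))))))) (TNode (TNode (TNode (TNode (TNode (TNode (TLeaf [:: 2; 6; 8; 10]) (TLeaf [:: 0; 12; 13; 14])) (TNode (TLeaf [:: 5; 13; 15; 20]) (TLeaf [:: 0; 13; 14; 16]))) (TNode (TNode (TLeaf [:: 1; 8; 10; 16]) (TLeaf [:: 1; 4; 10; 11])) (TNode (TLeaf [:: 1; 8; 10; 12]) (TLeaf [:: 1; 3; 14; 17])))) (TNode (TNode (TNode (TLeaf [:: 1; 10; 17; 19]) (TLeaf [:: 0; 2; 3; 18])) (TNode (TLeaf [:: 0; 2; 13; 20]) (TLeaf [:: 0; 9; 12; 13]))) (TNode (TNode (TLeaf [:: 2; 7; 9; 19]) (TLeaf [:: 1; 3; 9; 17])) (TNode (TLeaf [:: 1; 10; 15; 19]) (TLeaf [:: 6; 13; 15; 18]))))) (TNode (TNode (TNode (TNode (TLeaf [:: 13;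 14; 15; 17]) (TLeaf [:: 0; 1; 8; 10])) (TNode (TLeaf [:: 3; 5; 6; 9]) (TLeaf [:: 1; 4; 7; 9]))) (TNode (TNode (TLeaf [:: 4; 6; 7; 20]) (TLeaf [:: 1; 3; 5; 20])) (TNode (TLeaf [:: 1; 5; 13; 18]) (TLeaf [:: 2; 4; 10; 17])))) (TNode (TNode (TNode (TLeaf [:: 1; 3; 6; 18]) (TLeaf [:: 0; 4; 5; 10])) (TNode (TLeaf [:: 0; 7; 19; 20]) (TLeaf [:: 1; 6; 13; 20]))) (TNode (TNode (TLeaf [:: 2; 3; 16; 18]) (TLeaf [:: 2; 12; 13; 20])) (TNode (TLeaf [:: 2; 3; 12; 18]) (TLeaf [:: 2; 3; 9; 11])))))) (TNode (TNode (TNode (TNode (TNode (TLeaf [:: 2; 3; 4; 20]) (TLeaf [:: 2; 8; 9; 13])) (TNode (TLeaf [:: 0; 7; 14; 17]) (TLeaf [:: 2; 4; 13; 18]))) (TNode (TNode (TLeaf [:: 0; 7; 14; 15]) (TLeaf [:: 5; 7; 16; 20])) (TNode (TLeaf [:: 2; 5; 7; 9]) (TLeaf [:: 5; 7; 12; 20])))) (TNode (TNode (TNode (TLeaf [:: 0; 6; 10; 16]) (TLeaf [:: 3; 4; 14; 16])) (TNode (TLeaf [:: 0; 6; 10; 12]) (TLeaf [:: 2; 8; 13; 14]))) (TNode (TNode (TLeaf [:: 0; 1; 2; 10]) (TLeaf [:: 3; 17; 18; 19])) (TNode (TLeaf [:: 0; 7; 9; 15]) (TLeaf [:: 10; 11;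 12; 15]))))) (TNode (TNode (TNode (TNode (TLeaf [:: 0; 5; 7; 20]) (TLeaf [:: 7; 8; 9; 19])) (TNode (TLeaf [:: 3; 6; 14; 19]) (TLeaf [:: 0; 4; 10; 19]))) (TNode (TNode (TLeaf [:: 0; 3; 8; 18]) (TLeaf [:: 7; 12; 14; 17])) (TNode (TLeaf [:: 0; 3; 4; 9]) (TLeaf [:: 0; 8; 13; 20])))) (TNode (TNode (TNode (TLeaf [:: 0; 10; 11; 15]) (TLeaf [:: 1; 2; 10; 16])) (TNode (TLeaf [:: 1; 9; 10; 20]) (TLeaf [:: 1; 2; 10; 12]))) (TNode (TNode (TLeaf [:: 0; 3; 4; 14]) (TLeaf [:: 0; 6; 7; 18])) (TNode (TLeaf [:: 0; 10; 11; 17]) (TLeaf [:: 1; 3; 19; 20])))))))) (TNode (TNode (TNode (TNode (TNode (TNode (TNode (TLeaf [:: 8; 9; 19; 20]) (TLeaf [:: 0; 1; 14; 18])) (TNode (TLeaf [:: 2; 4; 11; 19]) (TLeaf [:: 0; 5; 12; 16]))) (TNode (TNode (TLeaf [:: 4; 9; 10; 13]) (TLeaf [:: 2; 9; 14; 17])) (TNode (TLeaf [:: 0; 7; 8; 13]) (TLeaf [:: 0; 5; 15; 17])))) (TNode (TNode (TNode (TLeaf [:: 0; 1; 11; 16]) (TLeaf [:: 0; 1; 4; 8])) (TNode (TLeaf [:: 0; 1; 11; 12]) (TLeaf [:: 0; 1; 9; 18]))) (TNode (TNode (TLeaf [:: 0; 2; 6; 11]) (TLeaf [:: 1; 6; 15;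 16])) (TNode (TLeaf [:: 1; 3; 7; 19]) (TLeaf [:: 0; 3; 6; 13]))))) (TNode (TNode (TNode (TNode (TLeaf [:: 1; 2; 5; 6]) (TLeaf [:: 2; 3; 4; 7])) (TNode (TLeaf [:: 4; 7; 11; 13]) (TLeaf [:: 0; 14; 17; 20]))) (TNode (TNode (TLeaf [:: 1; 14; 16; 18]) (TLeaf [:: 0; 14; 15; 20])) (TNode (TLeaf [:: 0; 2; 8; 19]) (TLeaf [:: 1; 9; 11; 14])))) (TNode (TNode (TNode (TLeaf [:: 0; 1; 6; 15]) (TLeaf [:: 0; 9; 17; 20])) (TNode (TLeaf [:: 0; 2; 16; 17]) (TLeaf [:: 1; 11; 15; 17]))) (TNode (TNode (TLeaf [:: 0; 2; 15; 16]) (TLeaf [:: 1; 2; 18; 20])) (TNode (TLeaf [:: 0; 1; 6; 17]) (TLeaf [:: 0; 9; 15; 20])))))) (TNode (TNode (TNode (TNode (TNode (TLeaf [:: 0; 4; 11; 15]) (TLeaf [:: 0; 8; 15; 16])) (TNode (TLeaf [:: 1; 4; 9; 20]) (TLeaf [:: 0; 8; 12; 15]))) (TNode (TNode (TLeaf [:: 0; 3; 10; 14]) (TLeaf [:: 0; 8; 12; 17])) (TNode (TLeaf [:: 0; 4; 11; 17]) (TLeaf [:: 0; 8; 16; 17])))) (TNode (TNode (TNode (TLeaf [:: 1; 4; 14; 20]) (TLeaf [:: 0; 12; 16; 19])) (TNode (TLeaf [:: 1; 6; 7; 13]) (TLeaf [:: 2; 5; 8; 12]))) (TNode (TNode (TLeaf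 [:: 2; 7; 12; 13]) (TLeaf [:: 0; 15; 17; 19])) (TNode (TLeaf [:: 0; 3; 9; 10]) (TLeaf [:: 3; 7; 11; 12]))))) (TNode (TNode (TNode (TNode (TLeaf [:: 0; 4; 6; 16]) (TLeaf [:: 0; 6; 8; 11])) (TNode (TLeaf [:: 0; 4; 6; 12]) (TLeaf [:: 3; 10; 12; 14]))) (TNode (TNode (TLeaf [:: 0; 1; 2; 4]) (TLeaf [:: 4; 11; 15; 16])) (TNode (TLeaf [:: 4; 9; 15; 18]) (TLeaf [:: 1; 5; 11; 19])))) (TNode (TNode (TNode (TLeaf [:: 0; 3; 7; 11]) (TLeaf [:: 3; 9; 10; 12])) (TNode (TLeaf [:: 1; 2; 6; 19]) (TLeaf [:: 0; 2; 7; 13]))) (TNode (TNode (TLeaf [:: 0; 2; 5; 8]) (TLeaf [:: 2; 9; 19; 20])) (TNode (TLeaf [:: 8; 9; 14; 15]) (TLeaf [:: 4; 8; 11; 19]))))))) (TNode (TNode (TNode (TNode (TNode (TNode (TLeaf [:: 0; 2; 4; 12]) (TLeaf [:: 0; 4; 9; 20])) (TNode (TLeaf [:: 0; 2; 4; 16]) (TLeaf [:: 0; 2; 8; 11]))) (TNode (TNode (TLeaf [:: 1; 8; 16; 17]) (TLeaf [:: 1; 4; 11; 17])) (TNode (TLeaf [:: 0; 1; 4; 6]) (TLeaf [:: 0; 3; 5; 7])))) (TNode (TNode (TNode (TLeaf [:: 4; 5; 12; 15]) (TLeaf [:: 0; 6; 7; 13])) (TNode (TLeaf [:: 1; 12;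 16; 19]) (TLeaf [:: 0; 4; 14; 20]))) (TNode (TNode (TLeaf [:: 2; 6; 16; 19]) (TLeaf [:: 1; 3; 9; 10])) (TNode (TLeaf [:: 0; 5; 6; 8]) (TLeaf [:: 2; 3; 7; 15]))))) (TNode (TNode (TNode (TNode (TLeaf [:: 3; 5; 7; 12]) (TLeaf [:: 0; 1; 8; 17])) (TNode (TLeaf [:: 1; 6; 8; 11]) (TLeaf [:: 1; 4; 6; 16]))) (TNode (TNode (TLeaf [:: 0; 5; 11; 19]) (TLeaf [:: 2; 4; 12; 16])) (TNode (TLeaf [:: 2; 8; 11; 16]) (TLeaf [:: 0; 1; 8; 15])))) (TNode (TNode (TNode (TLeaf [:: 1; 2; 7; 13]) (TLeaf [:: 0; 2; 6; 19])) (TNode (TLeaf [:: 2; 11; 17; 19]) (TLeaf [:: 1; 3; 7; 11]))) (TNode (TNode (TLeaf [:: 2; 11; 15; 19]) (TLeaf [:: 0; 1; 16; 19])) (TNode (TLeaf [:: 4; 14; 16; 20]) (TLeaf [:: 0; 1; 12; 19])))))) (TNode (TNode (TNode (TNode (TNode (TLeaf [:: 1; 5; 12; 16]) (TLeaf [:: 3; 13; 14; 20])) (TNode (TLeaf [:: 0; 7; 10; 14]) (TLeaf [:: 3; 4; 6; 7]))) (TNode (TNode (TLeaf [:: 0; 6; 8; 19]) (TLeaf [:: 1; 7; 8; 13])) (TNode (TLeaf [:: 2; 5; 6; 16]) (TLeaf [:: 8; 11; 17; 19])))) (TNode (TNode (TNode (TLeaf [:: 0; 6; 16; 17]) (TLeaf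 [:: 2; 12; 18; 20])) (TNode (TLeaf [:: 0; 1; 2; 15]) (TLeaf [:: 2; 16; 18; 20]))) (TNode (TNode (TLeaf [:: 0; 1; 2; 17]) (TLeaf [:: 0; 3; 7; 19])) (TNode (TLeaf [:: 0; 6; 15; 16]) (TLeaf [:: 1; 2; 6; 11]))))) (TNode (TNode (TNode (TNode (TLeaf [:: 1; 14; 17; 20]) (TLeaf [:: 6; 8; 16; 19])) (TNode (TLeaf [:: 3; 7; 8; 15]) (TLeaf [:: 0; 2; 5; 6]))) (TNode (TNode (TLeaf [:: 0; 9; 11; 14]) (TLeaf [:: 0; 1; 5; 12])) (TNode (TLeaf [:: 1; 14; 15; 20]) (TLeaf [:: 0; 1; 5; 16])))) (TNode (TNode (TNode (TLeaf [:: 0; 11; 15; 17]) (TLeaf [:: 1; 2; 16; 17])) (TNode (TLeaf [:: 1; 9; 17; 20]) (TLeaf [:: 1; 2; 12; 17]))) (TNode (TNode (TLeaf [:: 0; 11; 12; 16]) (TLeaf [:: 0; 2; 3; 13])) (TNode (TLeaf [:: 0; 2; 18; 20]) (TLeaf [:: 0; 4; 8; 16]))))))))))) (TNode (TNode (TNode (TNode (TNode (TNode (TNode (TNode (TNode (TNode (TLeaf [:: 2; 5; 9; 17]) (TLeaf [:: 5; 12; 17; 20])) (TNode (TLeaf [:: 0; 14; 15; 17]) (TLeaf [:: 1; 8; 10; 13]))) (TNode (TNode (TLeaf [:: 0; 1; 5; 18]) (TLeaf [:: 3; 4; 6; 10])) (TNode (TLeaf [:: 0; 12; 14; 16]) (TLeaf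 [:: 1; 4; 19; 20])))) (TNode (TNode (TNode (TLeaf [:: 0; 9; 15; 17]) (TLeaf [:: 0; 1; 6; 20])) (TNode (TLeaf [:: 1; 2; 17; 18]) (TLeaf [:: 0; 3; 10; 19]))) (TNode (TNode (TLeaf [:: 0; 4; 8; 18]) (TLeaf [:: 0; 2; 16; 20])) (TNode (TLeaf [:: 6; 16; 17; 18]) (TLeaf [:: 0; 2; 12; 20]))))) (TNode (TNode (TNode (TNode (TLeaf [:: 0; 5; 15; 20]) (TLeaf [:: 1; 5; 16; 18])) (TNode (TLeaf [:: 1; 5; 9; 11]) (TLeaf [:: 1; 5; 12; 18]))) (TNode (TNode (TLeaf [:: 3; 8; 10; 15]) (TLeaf [:: 1; 2; 6; 14])) (TNode (TLeaf [:: 0; 5; 17; 20]) (TLeaf [:: 8; 9; 17; 19])))) (TNode (TNode (TNode (TLeaf [:: 0; 7; 10; 11]) (TLeaf [:: 4; 8; 16; 18])) (TNode (TLeaf [:: 2; 12; 16; 20]) (TLeaf [:: 0; 6; 17; 18]))) (TNode (TNode (TLeaf [:: 1; 6; 16; 20]) (TLeaf [:: 0; 6; 15; 18])) (TNode (TLeaf [:: 1; 6; 12; 20]) (TLeaf [:: 1; 2; 6; 9])))))) (TNode (TNode (TNode (TNode (TNode (TLeaf [:: 1; 4; 6; 18]) (TLeaf [:: 0; 3; 5; 10])) (TNode (TLeaf [:: 1; 6; 8; 9]) (TLeaf [:: 8; 15; 17; 20]))) (TNode (TNode (TLeaf [:: 0; 5; 9; 19]) (TLeaf [:: 2; 8;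 11; 18])) (TNode (TLeaf [:: 2; 4; 12; 18]) (TLeaf [:: 2; 4; 9; 11])))) (TNode (TNode (TNode (TLeaf [:: 1; 6; 8; 14]) (TLeaf [:: 2; 3; 10; 15])) (TNode (TLeaf [:: 2; 9; 17; 19]) (TLeaf [:: 1; 3; 7; 9]))) (TNode (TNode (TLeaf [:: 2; 8; 14; 16]) (TLeaf [:: 1; 4; 5; 20])) (TNode (TLeaf [:: 0; 1; 18; 19]) (TLeaf [:: 0; 6; 10; 13]))))) (TNode (TNode (TNode (TNode (TLeaf [:: 0; 8; 16; 20]) (TLeaf [:: 0; 2; 4; 18])) (TNode (TLeaf [:: 0; 8; 12; 20]) (TLeaf [:: 0; 2; 8; 9]))) (TNode (TNode (TLeaf [:: 3; 5; 10; 16]) (TLeaf [:: 1; 4; 9; 17])) (TNode (TLeaf [:: 3; 5; 10; 12]) (TLeaf [:: 1; 8; 17; 18])))) (TNode (TNode (TNode (TLeaf [:: 1; 9; 11; 19]) (TLeaf [:: 0; 2; 8; 14])) (TNode (TLeaf [:: 0; 15; 19; 20]) (TLeaf [:: 1; 16; 18; 19]))) (TNode (TNode (TLeaf [:: 0; 17; 19; 20]) (TLeaf [:: 1; 3; 10; 11])) (TNode (TLeaf [:: 1; 2; 10; 13]) (TLeaf [:: 1; 4; 14; 17]))))))) (TNode (TNode (TNode (TNode (TNode (TNode (TLeaf [:: 2; 4; 17; 20]) (TLeaf [:: 0; 6; 8; 9])) (TNode (TLeaf [:: 0; 3; 7; 14]) (TLeaf [:: 0; 4; 6; 18]))) (TNode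 (TNode (TLeaf [:: 8; 9; 11; 15]) (TLeaf [:: 4; 8; 14; 19])) (TNode (TLeaf [:: 0; 1; 8; 20]) (TLeaf [:: 1; 5; 9; 19])))) (TNode (TNode (TNode (TLeaf [:: 0; 3; 7; 9]) (TLeaf [:: 3; 10; 11; 12])) (TNode (TLeaf [:: 2; 10; 12; 13]) (TLeaf [:: 0; 6; 8; 14]))) (TNode (TNode (TLeaf [:: 1; 6; 10; 13]) (TLeaf [:: 0; 7; 10; 19])) (TNode (TLeaf [:: 0; 4; 5; 20]) (TLeaf [:: 4; 8; 9; 19]))))) (TNode (TNode (TNode (TNode (TLeaf [:: 0; 4; 9; 15]) (TLeaf [:: 0; 11; 14; 19])) (TNode (TLeaf [:: 0; 8; 15; 18]) (TLeaf [:: 1; 8; 16; 20]))) (TNode (TNode (TLeaf [:: 0; 8; 17; 18]) (TLeaf [:: 3; 7; 12; 14])) (TNode (TLeaf [:: 0; 4; 9; 17]) (TLeaf [:: 2; 6; 8; 20])))) (TNode (TNode (TNode (TLeaf [:: 0; 16; 18; 19]) (TLeaf [:: 1; 15; 19; 20])) (TNode (TLeaf [:: 0; 4; 14; 15]) (TLeaf [:: 0; 9; 11; 19]))) (TNode (TNode (TLeaf [:: 0; 4; 14; 17]) (TLeaf [:: 0; 2; 10; 13])) (TNode (TLeaf [:: 0; 3; 10; 11]) (TLeaf [:: 1; 17; 19; 20])))))) (TNode (TNode (TNode (TNode (TNode (TLeaf [:: 0; 8; 10; 13]) (TLeaf [:: 1; 14; 15; 17])) (TNode (TLeaf [:: 4;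 7; 9; 13]) (TLeaf [:: 2; 6; 14; 16]))) (TNode (TNode (TLeaf [:: 0; 4; 19; 20]) (TLeaf [:: 1; 12; 14; 16])) (TNode (TLeaf [:: 5; 9; 11; 12]) (TLeaf [:: 0; 5; 7; 10])))) (TNode (TNode (TNode (TLeaf [:: 1; 3; 10; 19]) (TLeaf [:: 0; 2; 17; 18])) (TNode (TLeaf [:: 2; 6; 11; 18]) (TLeaf [:: 1; 9; 15; 17]))) (TNode (TNode (TLeaf [:: 1; 2; 12; 20]) (TLeaf [:: 5; 9; 14; 18])) (TNode (TLeaf [:: 1; 2; 16; 20]) (TLeaf [:: 0; 2; 15; 18]))))) (TNode (TNode (TNode (TNode (TLeaf [:: 0; 1; 12; 14]) (TLeaf [:: 0; 5; 9; 11])) (TNode (TLeaf [:: 0; 1; 14; 16]) (TLeaf [:: 1; 5; 15; 20]))) (TNode (TNode (TLeaf [:: 4; 10; 11; 13]) (TLeaf [:: 1; 5; 17; 20])) (TNode (TLeaf [:: 0; 2; 6; 14]) (TLeaf [:: 2; 3; 4; 10])))) (TNode (TNode (TNode (TLeaf [:: 0; 1; 9; 16]) (TLeaf [:: 2; 9; 11; 15])) (TNode (TLeaf [:: 0; 1; 9; 12]) (TLeaf [:: 0; 1; 2; 20]))) (TNode (TNode (TLeaf [:: 0; 2; 6; 9]) (TLeaf [:: 0; 6; 12; 20])) (TNode (TLeaf [:: 1; 6; 15; 18]) (TLeaf [:: 0; 6; 16; 20])))))))) (TNode (TNode (TNode (TNode (TNode (TNode (TNode (TLeaf [:: 2; 5;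 9; 10]) (TLeaf [:: 5; 10; 12; 20])) (TNode (TLeaf [:: 0; 10; 14; 15]) (TLeaf [:: 1; 8; 13; 17]))) (TNode (TNode (TLeaf [:: 0; 10; 14; 17]) (TLeaf [:: 0; 2; 4; 13])) (TNode (TLeaf [:: 0; 3; 4; 11]) (TLeaf [:: 0; 3; 8; 16])))) (TNode (TNode (TNode (TLeaf [:: 0; 9; 10; 15]) (TLeaf [:: 7; 11; 12; 15])) (TNode (TLeaf [:: 0; 1; 2; 7]) (TLeaf [:: 0; 3; 17; 19]))) (TNode (TNode (TLeaf [:: 0; 6; 7; 12]) (TLeaf [:: 0; 3; 15; 19])) (TNode (TLeaf [:: 0; 6; 7; 16]) (TLeaf [:: 1; 13; 16; 19]))))) (TNode (TNode (TNode (TNode (TLeaf [:: 2; 4; 13; 16]) (TLeaf [:: 2; 8; 11; 13])) (TNode (TLeaf [:: 2; 4; 12; 13]) (TLeaf [:: 3; 4; 11; 16]))) (TNode (TNode (TLeaf [:: 1; 4; 6; 13]) (TLeaf [:: 0; 4; 7; 19])) (TNode (TLeaf [:: 0; 5; 10; 20]) (TLeaf [:: 8; 9; 10; 19])))) (TNode (TNode (TNode (TLeaf [:: 0; 7; 11; 17]) (TLeaf [:: 4; 13; 14; 20])) (TNode (TLeaf [:: 0; 1; 13; 19]) (TLeaf [:: 0; 6; 10; 18]))) (TNode (TNode (TLeaf [:: 1; 7; 9; 20]) (TLeaf [:: 1; 2; 7; 12])) (TNode (TLeaf [:: 0; 7; 11; 15]) (TLeaf [:: 1; 2; 7; 16]))))))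 (TNode (TNode (TNode (TNode (TNode (TLeaf [:: 1; 7; 8; 12]) (TLeaf [:: 0; 3; 5; 17])) (TNode (TLeaf [:: 1; 7; 8; 16]) (TLeaf [:: 1; 4; 7; 11]))) (TNode (TNode (TLeaf [:: 3; 12; 14; 20]) (TLeaf [:: 1; 5; 13; 16])) (TNode (TLeaf [:: 2; 6; 7; 8]) (TLeaf [:: 0; 3; 5; 15])))) (TNode (TNode (TNode (TLeaf [:: 1; 7; 15; 19]) (TLeaf [:: 0; 6; 13; 15])) (TNode (TLeaf [:: 2; 9; 10; 19]) (TLeaf [:: 1; 3; 6; 16]))) (TNode (TNode (TLeaf [:: 2; 13; 18; 20]) (TLeaf [:: 2; 3; 12; 16])) (TNode (TLeaf [:: 1; 7; 17; 19]) (TLeaf [:: 0; 6; 13; 17]))))) (TNode (TNode (TNode (TNode (TLeaf [:: 0; 1; 5; 13]) (TLeaf [:: 2; 4; 7; 17])) (TNode (TLeaf [:: 3; 5; 15; 16]) (TLeaf [:: 0; 3; 14; 20]))) (TNode (TNode (TLeaf [:: 3; 5; 16; 17]) (TLeaf [:: 1; 4; 9; 10])) (TNode (TLeaf [:: 3; 5; 12; 17]) (TLeaf [:: 0; 1; 7; 8])))) (TNode (TNode (TNode (TLeaf [:: 0; 2; 3; 12]) (TLeaf [:: 0; 3; 9; 20])) (TNode (TLeaf [:: 0; 2; 3; 16]) (TLeaf [:: 0; 11; 12; 13]))) (TNode (TNode (TLeaf [:: 0; 10; 19; 20]) (TLeaf [:: 1; 3; 11; 17])) (TNode (TLeaf [::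 0; 1; 3; 6]) (TLeaf [:: 0; 4; 5; 7]))))))) (TNode (TNode (TNode (TNode (TNode (TNode (TLeaf [:: 0; 4; 7; 11]) (TLeaf [:: 0; 7; 8; 16])) (TNode (TLeaf [:: 1; 3; 5; 17]) (TLeaf [:: 0; 7; 8; 12]))) (TNode (TNode (TLeaf [:: 0; 5; 12; 13]) (TLeaf [:: 4; 6; 7; 15])) (TNode (TLeaf [:: 0; 5; 13; 16]) (TLeaf [:: 3; 8; 11; 19])))) (TNode (TNode (TNode (TLeaf [:: 0; 3; 6; 16]) (TLeaf [:: 3; 11; 12; 17])) (TNode (TLeaf [:: 0; 3; 6; 12]) (TLeaf [:: 0; 7; 15; 19]))) (TNode (TNode (TLeaf [:: 0; 1; 2; 3]) (TLeaf [:: 0; 7; 17; 19])) (TNode (TLeaf [:: 2; 13; 15; 16]) (TLeaf [:: 0; 1; 11; 13]))))) (TNode (TNode (TNode (TNode (TLeaf [:: 1; 3; 14; 20]) (TLeaf [:: 5; 12; 13; 16])) (TNode (TLeaf [:: 6; 10; 14; 19]) (TLeaf [:: 0; 3; 4; 19]))) (TNode (TNode (TLeaf [:: 0; 8; 10; 18]) (TLeaf [:: 4; 7; 11; 16])) (TNode (TLeaf [:: 0; 4; 9; 10]) (TLeaf [:: 3; 6; 9; 14])))) (TNode (TNode (TNode (TLeaf [:: 0; 3; 11; 15]) (TLeaf [:: 1; 2; 3; 16])) (TNode (TLeaf [:: 1; 3; 9; 20]) (TLeaf [:: 0; 2; 13; 15]))) (TNode (TNode (TLeaf [:: 0; 4;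 10; 14]) (TLeaf [:: 0; 2; 13; 17])) (TNode (TLeaf [:: 0; 3; 11; 17]) (TLeaf [:: 1; 10; 19; 20])))))) (TNode (TNode (TNode (TNode (TNode (TLeaf [:: 0; 8; 13; 17]) (TLeaf [:: 0; 5; 7; 15])) (TNode (TLeaf [:: 4; 6; 13; 16]) (TLeaf [:: 2; 7; 9; 14]))) (TNode (TNode (TLeaf [:: 1; 3; 8; 16]) (TLeaf [:: 1; 3; 4; 11])) (TNode (TLeaf [:: 0; 8; 13; 15]) (TLeaf [:: 0; 5; 7; 17])))) (TNode (TNode (TNode (TLeaf [:: 1; 3; 17; 19]) (TLeaf [:: 0; 2; 10; 18])) (TNode (TLeaf [:: 3; 7; 11; 13]) (TLeaf [:: 1; 9; 10; 15]))) (TNode (TNode (TLeaf [:: 0; 13; 16; 19]) (TLeaf [:: 1; 6; 7; 16])) (TNode (TLeaf [:: 0; 12; 13; 19]) (TLeaf [:: 1; 6; 7; 12]))))) (TNode (TNode (TNode (TNode (TLeaf [:: 5; 7; 12; 17]) (TLeaf [:: 0; 1; 3; 8])) (TNode (TLeaf [:: 4; 11; 13; 15]) (TLeaf [:: 8; 13; 15; 16]))) (TNode (TNode (TLeaf [:: 4; 11; 13; 17]) (TLeaf [:: 0; 7; 14; 20])) (TNode (TLeaf [:: 1; 4; 7; 19]) (TLeaf [:: 0; 4; 6; 13])))) (TNode (TNode (TNode (TLeaf [:: 0; 1; 6; 7]) (TLeaf [:: 0; 3; 4; 5])) (TNode (TLeaf [:: 2; 3; 11; 19]) (TLeaf [::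 1; 7; 11; 17]))) (TNode (TNode (TLeaf [:: 0; 2; 7; 16]) (TLeaf [:: 1; 7; 11; 15])) (TNode (TLeaf [:: 0; 2; 7; 12]) (TLeaf [:: 0; 7; 9; 20]))))))))) (TNode (TNode (TNode (TNode (TNode (TNode (TNode (TNode (TLeaf [:: 0; 12; 15; 16]) (TLeaf [:: 1; 2; 11; 12])) (TNode (TLeaf [:: 1; 2; 4; 8]) (TLeaf [:: 1; 2; 11; 16]))) (TNode (TNode (TLeaf [:: 2; 3; 6; 13]) (TLeaf [:: 6; 11; 12; 16])) (TNode (TLeaf [:: 0; 12; 16; 17]) (TLeaf [:: 2; 6; 18; 20])))) (TNode (TNode (TNode (TLeaf [:: 0; 8; 16; 19]) (TLeaf [:: 0; 4; 11; 19])) (TNode (TLeaf [:: 0; 8; 12; 19]) (TLeaf [:: 5; 9; 12; 20]))) (TNode (TNode (TLeaf [:: 1; 5; 6; 12]) (TLeaf [:: 2; 7; 8; 13])) (TNode (TLeaf [:: 0; 9; 14; 17]) (TLeaf [:: 3; 4; 7; 16]))))) (TNode (TNode (TNode (TNode (TLeaf [:: 0; 6; 11; 12]) (TLeaf [:: 0; 6; 9; 18])) (TNode (TLeaf [:: 0; 6; 11; 16]) (TLeaf [:: 0; 4; 6; 8]))) (TNode (TNode (TLeaf [:: 2; 9; 15; 20]) (TLeaf [:: 0; 1; 3; 13])) (TNode (TLeaf [:: 0; 1; 2; 11]) (TLeaf [:: 8; 9; 14; 19])))) (TNode (TNode (TNode (TLeaf [:: 1; 5; 11; 17]) (TLeaf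 [:: 4; 10; 13; 20])) (TNode (TLeaf [:: 0; 3; 4; 7]) (TLeaf [:: 0; 1; 5; 6]))) (TNode (TNode (TLeaf [:: 0; 5; 9; 20]) (TLeaf [:: 0; 2; 5; 12])) (TNode (TLeaf [:: 1; 5; 11; 15]) (TLeaf [:: 0; 2; 5; 16])))))) (TNode (TNode (TNode (TNode (TNode (TLeaf [:: 0; 5; 8; 12]) (TLeaf [:: 1; 3; 7; 17])) (TNode (TLeaf [:: 0; 5; 8; 16]) (TLeaf [:: 0; 4; 5; 11]))) (TNode (TNode (TLeaf [:: 1; 6; 16; 19]) (TLeaf [:: 0; 7; 13; 16])) (TNode (TLeaf [:: 1; 6; 12; 19]) (TLeaf [:: 0; 7; 12; 13])))) (TNode (TNode (TNode (TLeaf [:: 0; 1; 4; 12]) (TLeaf [:: 8; 9; 15; 20])) (TNode (TLeaf [:: 0; 1; 4; 16]) (TLeaf [:: 0; 1; 8; 11]))) (TNode (TNode (TLeaf [:: 2; 8; 16; 17]) (TLeaf [:: 2; 4; 11; 17])) (TNode (TLeaf [:: 0; 2; 4; 6]) (TLeaf [:: 2; 3; 10; 14]))))) (TNode (TNode (TNode (TNode (TLeaf [:: 0; 10; 13; 18]) (TLeaf [:: 0; 1; 6; 19])) (TNode (TLeaf [:: 1; 11; 17; 19]) (TLeaf [:: 0; 3; 10; 20]))) (TNode (TNode (TLeaf [:: 1; 11; 15; 19]) (TLeaf [:: 0; 2; 16; 19])) (TNode (TLeaf [:: 0; 9; 19; 20]) (TLeaf [:: 0; 2; 12; 19])))) (TNode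 (TNode (TNode (TLeaf [:: 4; 6; 9; 20]) (TLeaf [:: 0; 2; 8; 17])) (TNode (TLeaf [:: 2; 6; 8; 11]) (TLeaf [:: 2; 4; 6; 16]))) (TNode (TNode (TLeaf [:: 0; 14; 19; 20]) (TLeaf [:: 1; 4; 12; 16])) (TNode (TLeaf [:: 1; 8; 11; 16]) (TLeaf [:: 0; 2; 8; 15]))))))) (TNode (TNode (TNode (TNode (TNode (TNode (TLeaf [:: 1; 4; 5; 11]) (TLeaf [:: 1; 5; 8; 16])) (TNode (TLeaf [:: 0; 3; 7; 17]) (TLeaf [:: 0; 1; 2; 19]))) (TNode (TNode (TLeaf [:: 0; 3; 7; 15]) (TLeaf [:: 0; 6; 12; 19])) (TNode (TLeaf [:: 1; 7; 13; 16]) (TLeaf [:: 0; 6; 16; 19])))) (TNode (TNode (TNode (TLeaf [:: 2; 8; 18; 20]) (TLeaf [:: 8; 9; 12; 18])) (TNode (TLeaf [:: 2; 4; 9; 20]) (TLeaf [:: 0; 6; 8; 17]))) (TNode (TNode (TLeaf [:: 2; 3; 5; 7]) (TLeaf [:: 0; 6; 8; 15])) (TNode (TLeaf [:: 8; 11; 15; 17]) (TLeaf [:: 4; 15; 16; 17]))))) (TNode (TNode (TNode (TNode (TLeaf [:: 1; 3; 10; 20]) (TLeaf [:: 0; 11; 17; 19])) (TNode (TLeaf [:: 2; 4; 5; 17]) (TLeaf [:: 0; 1; 7; 13]))) (TNode (TNode (TLeaf [:: 0; 1; 5; 8]) (TLeaf [:: 1; 9; 19; 20])) (TNode (TLeaf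 [:: 0; 4; 9; 14]) (TLeaf [:: 0; 11; 15; 19])))) (TNode (TNode (TNode (TLeaf [:: 6; 8; 15; 16]) (TLeaf [:: 4; 6; 11; 15])) (TNode (TLeaf [:: 0; 4; 15; 17]) (TLeaf [:: 3; 7; 8; 19]))) (TNode (TNode (TLeaf [:: 1; 2; 8; 15]) (TLeaf [:: 0; 8; 11; 16])) (TNode (TLeaf [:: 0; 4; 12; 16]) (TLeaf [:: 0; 8; 11; 12])))))) (TNode (TNode (TNode (TNode (TNode (TLeaf [:: 0; 2; 11; 16]) (TLeaf [:: 0; 2; 4; 8])) (TNode (TLeaf [:: 0; 2; 11; 12]) (TLeaf [:: 0; 2; 9; 18]))) (TNode (TNode (TLeaf [:: 0; 1; 6; 11]) (TLeaf [:: 1; 12; 16; 17])) (TNode (TLeaf [:: 2; 3; 7; 19]) (TLeaf [:: 2; 6; 12; 15])))) (TNode (TNode (TNode (TLeaf [:: 4; 7; 13; 17]) (TLeaf [:: 0; 1; 2; 5])) (TNode (TLeaf [:: 1; 4; 11; 19]) (TLeaf [:: 1; 8; 16; 19]))) (TNode (TNode (TLeaf [:: 5; 11; 12; 17]) (TLeaf [:: 0; 5; 6; 16])) (TNode (TLeaf [:: 4; 7; 13; 15]) (TLeaf [:: 0; 5; 6; 12]))))) (TNode (TNode (TNode (TNode (TLeaf [:: 0; 1; 12; 17]) (TLeaf [:: 1; 6; 11; 16])) (TNode (TLeaf [:: 0; 1; 16; 17]) (TLeaf [:: 1; 6; 11; 12]))) (TNode (TNode (TLeaf [:: 0; 1;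 15; 16]) (TLeaf [:: 0; 7; 10; 20])) (TNode (TLeaf [:: 0; 1; 12; 15]) (TLeaf [:: 2; 11; 12; 16])))) (TNode (TNode (TNode (TLeaf [:: 1; 6; 14; 18]) (TLeaf [:: 1; 3; 4; 7])) (TNode (TLeaf [:: 5; 6; 12; 16]) (TLeaf [:: 0; 5; 11; 17]))) (TNode (TNode (TLeaf [:: 1; 2; 5; 16]) (TLeaf [:: 0; 5; 11; 15])) (TNode (TLeaf [:: 0; 1; 8; 19]) (TLeaf [:: 1; 5; 9; 20])))))))) (TNode (TNode (TNode (TNode (TNode (TNode (TNode (TLeaf [:: 3; 5; 8; 20]) (TLeaf [:: 0; 3; 9; 19])) (TNode (TLeaf [:: 0; 10; 15; 17]) (TLeaf [:: 1; 8; 13; 14]))) (TNode (TNode (TLeaf [:: 1; 5; 7; 14]) (TLeaf [:: 3; 4; 6; 14])) (TNode (TLeaf [:: 0; 10; 12; 16]) (TLeaf [:: 3; 7; 13; 20])))) (TNode (TNode (TNode (TLeaf [:: 1; 3; 4; 20]) (TLeaf [:: 1; 8; 9; 13])) (TNode (TLeaf [:: 2; 5; 10; 17]) (TLeaf [:: 0; 3; 14; 19]))) (TNode (TNode (TLeaf [:: 2; 5; 10; 15]) (TLeaf [:: 3; 6; 8; 18])) (TNode (TLeaf [:: 0; 9; 10; 14]) (TLeaf [:: 3; 4; 6; 9]))))) (TNode (TNode (TNode (TNode (TLeaf [:: 1; 7; 15; 20]) (TLeaf [:: 0; 7; 16; 18])) (TNode (TLeaf [:: 0; 7; 9; 11])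 (TLeaf [:: 0; 7; 12; 18]))) (TNode (TNode (TLeaf [:: 2; 13; 18; 19]) (TLeaf [:: 1; 2; 6; 10])) (TNode (TLeaf [:: 1; 7; 17; 20]) (TLeaf [:: 2; 3; 19; 20])))) (TNode (TNode (TNode (TLeaf [:: 0; 7; 11; 14]) (TLeaf [:: 4; 13; 17; 20])) (TNode (TLeaf [:: 3; 4; 17; 18]) (TLeaf [:: 6; 7; 14; 17]))) (TNode (TNode (TLeaf [:: 3; 4; 15; 18]) (TLeaf [:: 6; 7; 14; 15])) (TNode (TLeaf [:: 3; 8; 9; 15]) (TLeaf [:: 4; 13; 15; 20])))))) (TNode (TNode (TNode (TNode (TNode (TLeaf [:: 2; 10; 17; 19]) (TLeaf [:: 0; 1; 3; 18])) (TNode (TLeaf [:: 0; 1; 13; 20]) (TLeaf [:: 2; 3; 9; 15]))) (TNode (TNode (TLeaf [:: 1; 7; 9; 19]) (TLeaf [:: 0; 6; 9; 13])) (TNode (TLeaf [:: 2; 10; 15; 19]) (TLeaf [:: 12; 13; 17; 18])))) (TNode (TNode (TNode (TLeaf [:: 1; 6; 8; 10]) (TLeaf [:: 2; 3; 14; 15])) (TNode (TLeaf [:: 3; 8; 19; 20]) (TLeaf [:: 0; 3; 5; 9]))) (TNode (TNode (TLeaf [:: 2; 8; 10; 16]) (TLeaf [:: 0; 4; 7; 20])) (TNode (TLeaf [:: 0; 5; 10; 19]) (TLeaf [:: 0; 6; 13; 14]))))) (TNode (TNode (TNode (TNode (TLeaf [:: 0; 13; 17; 18]) (TLeaf [:: 2;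 4; 7; 14])) (TNode (TLeaf [:: 1; 10; 11; 19]) (TLeaf [:: 0; 3; 17; 20]))) (TNode (TNode (TLeaf [:: 1; 2; 9; 13]) (TLeaf [:: 0; 3; 15; 20])) (TNode (TLeaf [:: 0; 13; 15; 18]) (TLeaf [:: 1; 3; 9; 11])))) (TNode (TNode (TNode (TLeaf [:: 4; 7; 16; 20]) (TLeaf [:: 0; 2; 8; 10])) (TNode (TLeaf [:: 4; 7; 12; 20]) (TLeaf [:: 2; 4; 7; 9]))) (TNode (TNode (TLeaf [:: 3; 5; 9; 12]) (TLeaf [:: 1; 3; 11; 14])) (TNode (TLeaf [:: 1; 2; 13; 14]) (TLeaf [:: 1; 4; 10; 17]))))))) (TNode (TNode (TNode (TNode (TNode (TNode (TLeaf [:: 2; 9; 12; 13]) (TLeaf [:: 2; 11; 13; 18])) (TNode (TLeaf [:: 0; 3; 7; 10]) (TLeaf [:: 3; 9; 11; 12]))) (TNode (TNode (TLeaf [:: 3; 15; 17; 18]) (TLeaf [:: 4; 8; 10; 19])) (TNode (TLeaf [:: 1; 6; 9; 13]) (TLeaf [:: 0; 7; 9; 19])))) (TNode (TNode (TNode (TLeaf [:: 1; 3; 5; 9]) (TLeaf [:: 3; 11; 12; 14])) (TNode (TLeaf [:: 2; 12; 13; 14]) (TLeaf [:: 0; 6; 8; 10]))) (TNode (TNode (TLeaf [:: 1; 6; 13; 14]) (TLeaf [:: 0; 7; 14; 19])) (TNode (TLeaf [:: 1; 4; 7; 20]) (TLeaf [:: 3; 5; 6; 20]))))) (TNode (TNode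 (TNode (TNode (TLeaf [:: 1; 3; 17; 20]) (TLeaf [:: 0; 10; 11; 19])) (TNode (TLeaf [:: 2; 4; 5; 10]) (TLeaf [:: 1; 13; 17; 18]))) (TNode (TNode (TLeaf [:: 0; 3; 9; 11]) (TLeaf [:: 0; 3; 12; 18])) (TNode (TLeaf [:: 0; 12; 13; 20]) (TLeaf [:: 0; 2; 9; 13])))) (TNode (TNode (TNode (TLeaf [:: 7; 8; 9; 15]) (TLeaf [:: 5; 9; 13; 17])) (TNode (TLeaf [:: 0; 4; 10; 15]) (TLeaf [:: 3; 6; 14; 15]))) (TNode (TNode (TLeaf [:: 0; 4; 10; 17]) (TLeaf [:: 0; 2; 13; 14])) (TNode (TLeaf [:: 0; 3; 11; 14]) (TLeaf [:: 4; 6; 10; 11])))))) (TNode (TNode (TNode (TNode (TNode (TLeaf [:: 0; 8; 13; 14]) (TLeaf [:: 1; 10; 15; 17])) (TNode (TLeaf [:: 1; 3; 9; 19]) (TLeaf [:: 2; 6; 10; 16]))) (TNode (TNode (TLeaf [:: 7; 12; 15; 20]) (TLeaf [:: 1; 10; 12; 16])) (TNode (TLeaf [:: 6; 13; 18; 19]) (TLeaf [:: 0; 1; 7; 18])))) (TNode (TNode (TNode (TLeaf [:: 0; 4; 13; 18]) (TLeaf [:: 2; 7; 14; 17])) (TNode (TLeaf [:: 0; 8; 9; 13]) (TLeaf [:: 0; 3; 4; 20]))) (TNode (TNode (TLeaf [:: 5; 10; 11; 12]) (TLeaf [:: 0; 5; 7; 9])) (TNode (TLeaf [:: 5; 10;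 11; 16]) (TLeaf [:: 2; 7; 14; 15]))))) (TNode (TNode (TNode (TNode (TLeaf [:: 0; 1; 10; 12]) (TLeaf [:: 1; 7; 9; 11])) (TNode (TLeaf [:: 0; 1; 10; 16]) (TLeaf [:: 0; 7; 15; 20]))) (TNode (TNode (TLeaf [:: 4; 11; 13; 14]) (TLeaf [:: 0; 7; 17; 20])) (TNode (TLeaf [:: 0; 2; 6; 10]) (TLeaf [:: 2; 3; 4; 14])))) (TNode (TNode (TNode (TLeaf [:: 2; 4; 10; 19]) (TLeaf [:: 13; 14; 17; 19])) (TNode (TLeaf [:: 5; 7; 9; 12]) (TLeaf [:: 0; 5; 10; 11]))) (TNode (TNode (TLeaf [:: 2; 8; 13; 20]) (TLeaf [:: 2; 3; 4; 9])) (TNode (TLeaf [:: 3; 4; 16; 20]) (TLeaf [:: 2; 3; 8; 18])))))))))) (TNode (TNode (TNode (TNode (TNode (TNode (TNode (TNode (TNode (TLeaf [:: 0; 4; 9; 13]) (TLeaf [:: 0; 3; 8; 20])) (TNode (TLeaf [:: 0; 8; 13; 18]) (TLeaf [:: 5; 10; 15; 17]))) (TNode (TNode (TLeaf [:: 6; 13; 14; 19]) (TLeaf [:: 0; 1; 7; 14])) (TNode (TLeaf [:: 4; 7; 19; 20]) (TLeaf [:: 5; 10; 12; 16])))) (TNode (TNode (TNode (TLeaf [:: 0; 6; 7; 20]) (TLeaf [:: 1; 13; 19; 20])) (TNode (TLeaf [:: 0; 4; 13; 14]) (TLeaf [:: 0; 2; 10; 17]))) (TNode (TNode (TLeaf [::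 1; 10; 11; 16]) (TLeaf [:: 0; 2; 10; 15])) (TNode (TLeaf [:: 1; 10; 11; 12]) (TLeaf [:: 0; 1; 7; 9]))))) (TNode (TNode (TNode (TNode (TLeaf [:: 0; 5; 10; 16]) (TLeaf [:: 10; 14; 15; 20])) (TNode (TLeaf [:: 0; 5; 10; 12]) (TLeaf [:: 5; 7; 9; 11]))) (TNode (TNode (TLeaf [:: 2; 6; 7; 14]) (TLeaf [:: 2; 3; 4; 18])) (TNode (TLeaf [:: 2; 4; 13; 20]) (TLeaf [:: 2; 3; 8; 9])))) (TNode (TNode (TNode (TLeaf [:: 1; 7; 9; 12]) (TLeaf [:: 0; 1; 10; 11])) (TNode (TLeaf [:: 1; 6; 10; 17]) (TLeaf [:: 9; 10; 15; 20]))) (TNode (TNode (TLeaf [:: 1; 6; 10; 15]) (TLeaf [:: 2; 3; 8; 14])) (TNode (TLeaf [:: 2; 6; 7; 9]) (TLeaf [:: 4; 13; 14; 16])))))) (TNode (TNode (TNode (TNode (TNode (TLeaf [:: 1; 3; 5; 18]) (TLeaf [:: 0; 4; 6; 10])) (TNode (TLeaf [:: 3; 12; 14; 16]) (TLeaf [:: 1; 5; 13; 20]))) (TNode (TNode (TLeaf [:: 1; 7; 8; 20]) (TLeaf [:: 8; 10; 15; 16])) (TNode (TLeaf [:: 3; 14; 15; 17]) (TLeaf [:: 8; 10; 12; 15])))) (TNode (TNode (TNode (TLeaf [:: 2; 12; 13; 18]) (TLeaf [:: 2; 3; 16; 20])) (TNode (TLeaf [:: 2; 13; 16; 18]) (TLeaf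 [:: 2; 3; 12; 20]))) (TNode (TNode (TLeaf [:: 3; 9; 15; 17]) (TLeaf [:: 1; 3; 6; 20])) (TNode (TLeaf [:: 1; 6; 13; 18]) (TLeaf [:: 0; 7; 18; 19]))))) (TNode (TNode (TNode (TNode (TLeaf [:: 0; 8; 10; 15]) (TLeaf [:: 1; 13; 14; 17])) (TNode (TLeaf [:: 3; 5; 17; 20]) (TLeaf [:: 7; 11; 14; 19]))) (TNode (TNode (TLeaf [:: 3; 5; 15; 20]) (TLeaf [:: 0; 3; 14; 16])) (TNode (TLeaf [:: 0; 8; 10; 17]) (TLeaf [:: 0; 3; 12; 14])))) (TNode (TNode (TNode (TLeaf [:: 0; 10; 12; 19]) (TLeaf [:: 3; 6; 15; 18])) (TNode (TLeaf [:: 0; 10; 16; 19]) (TLeaf [:: 1; 9; 13; 17]))) (TNode (TNode (TLeaf [:: 0; 2; 3; 20]) (TLeaf [:: 0; 3; 9; 12])) (TNode (TLeaf [:: 4; 7; 14; 17]) (TLeaf [:: 0; 2; 13; 18]))))))) (TNode (TNode (TNode (TNode (TNode (TNode (TLeaf [:: 0; 5; 13; 20]) (TLeaf [:: 8; 9; 13; 19])) (TNode (TLeaf [:: 1; 4; 6; 10]) (TLeaf [:: 0; 1; 3; 14]))) (TNode (TNode (TLeaf [:: 2; 4; 10; 12]) (TLeaf [:: 4; 9; 10; 20])) (TNode (TLeaf [:: 2; 4; 10; 16]) (TLeaf [:: 0; 7; 8; 20])))) (TNode (TNode (TNode (TLeaf [:: 2; 13; 15; 20]) (TLeaf [:: 0;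 1; 3; 9])) (TNode (TLeaf [:: 5; 6; 8; 10]) (TLeaf [:: 2; 3; 15; 18]))) (TNode (TNode (TLeaf [:: 0; 1; 10; 19]) (TLeaf [:: 0; 6; 13; 18])) (TNode (TLeaf [:: 0; 3; 6; 20]) (TLeaf [:: 4; 10; 14; 20]))))) (TNode (TNode (TNode (TNode (TLeaf [:: 5; 10; 11; 19]) (TLeaf [:: 2; 7; 8; 9])) (TNode (TLeaf [:: 0; 13; 14; 17]) (TLeaf [:: 0; 2; 4; 10]))) (TNode (TNode (TLeaf [:: 0; 13; 14; 15]) (TLeaf [:: 1; 8; 10; 17])) (TNode (TLeaf [:: 1; 3; 14; 16]) (TLeaf [:: 5; 12; 13; 20])))) (TNode (TNode (TNode (TLeaf [:: 0; 9; 13; 17]) (TLeaf [:: 1; 10; 16; 19])) (TNode (TLeaf [:: 6; 12; 13; 18]) (TLeaf [:: 1; 10; 12; 19]))) (TNode (TNode (TLeaf [:: 1; 2; 13; 18]) (TLeaf [:: 2; 6; 10; 19])) (TNode (TLeaf [:: 0; 9; 13; 15]) (TLeaf [:: 1; 2; 3; 20])))))) (TNode (TNode (TNode (TNode (TNode (TLeaf [:: 6; 8; 10; 19]) (TLeaf [:: 1; 8; 13; 18])) (TNode (TLeaf [:: 1; 3; 8; 20]) (TLeaf [:: 1; 4; 9; 13]))) (TNode (TNode (TLeaf [:: 4; 6; 13; 20]) (TLeaf [:: 3; 6; 8; 9])) (TNode (TLeaf [:: 0; 1; 5; 10]) (TLeaf [:: 3; 4; 6; 18])))) (TNode (TNode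 (TNode (TLeaf [:: 1; 2; 10; 17]) (TLeaf [:: 0; 3; 18; 19])) (TNode (TLeaf [:: 0; 13; 19; 20]) (TLeaf [:: 1; 6; 7; 20]))) (TNode (TNode (TLeaf [:: 0; 9; 10; 18]) (TLeaf [:: 0; 10; 11; 12])) (TNode (TLeaf [:: 0; 4; 8; 10]) (TLeaf [:: 0; 10; 11; 16]))))) (TNode (TNode (TNode (TNode (TLeaf [:: 3; 8; 17; 18]) (TLeaf [:: 0; 7; 12; 14])) (TNode (TLeaf [:: 3; 4; 9; 17]) (TLeaf [:: 0; 7; 14; 16]))) (TNode (TNode (TLeaf [:: 3; 4; 9; 15]) (TLeaf [:: 3; 11; 14; 19])) (TNode (TLeaf [:: 2; 13; 14; 19]) (TLeaf [:: 2; 5; 6; 10])))) (TNode (TNode (TNode (TLeaf [:: 3; 4; 14; 17]) (TLeaf [:: 0; 6; 10; 17])) (TNode (TLeaf [:: 0; 2; 7; 20]) (TLeaf [:: 0; 7; 9; 12]))) (TNode (TNode (TLeaf [:: 2; 9; 13; 19]) (TLeaf [:: 12; 13; 19; 20])) (TNode (TLeaf [:: 3; 4; 14; 15]) (TLeaf [:: 0; 6; 10; 15])))))))) (TNode (TNode (TNode (TNode (TNode (TNode (TNode (TLeaf [:: 0; 12; 14; 20]) (TLeaf [:: 0; 2; 9; 14])) (TNode (TLeaf [:: 0; 14; 16; 20]) (TLeaf [:: 1; 4; 12; 19]))) (TNode (TNode (TLeaf [:: 7; 8; 13; 15]) (TLeaf [:: 1; 14; 17; 18])) (TNode (TLeaf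 [:: 0; 5; 6; 11]) (TLeaf [:: 5; 12; 16; 17])))) (TNode (TNode (TNode (TLeaf [:: 0; 3; 11; 13]) (TLeaf [:: 0; 2; 12; 16])) (TNode (TLeaf [:: 0; 9; 12; 20]) (TLeaf [:: 0; 11; 18; 20]))) (TNode (TNode (TLeaf [:: 1; 11; 16; 17]) (TLeaf [:: 0; 1; 6; 12])) (TNode (TLeaf [:: 1; 11; 12; 17]) (TLeaf [:: 0; 1; 6; 16]))))) (TNode (TNode (TNode (TNode (TLeaf [:: 0; 5; 16; 17]) (TLeaf [:: 5; 6; 11; 12])) (TNode (TLeaf [:: 0; 5; 12; 17]) (TLeaf [:: 1; 3; 7; 8]))) (TNode (TNode (TLeaf [:: 0; 1; 4; 19]) (TLeaf [:: 4; 6; 7; 13])) (TNode (TLeaf [:: 0; 5; 15; 16]) (TLeaf [:: 1; 2; 5; 11])))) (TNode (TNode (TNode (TLeaf [:: 1; 6; 12; 16]) (TLeaf [:: 0; 1; 11; 17])) (TNode (TLeaf [:: 2; 12; 15; 17]) (TLeaf [:: 0; 7; 13; 19]))) (TNode (TNode (TLeaf [:: 0; 5; 8; 19]) (TLeaf [:: 2; 9; 11; 18])) (TNode (TLeaf [:: 3; 9; 13; 18]) (TLeaf [:: 0; 1; 11; 15])))))) (TNode (TNode (TNode (TNode (TNode (TLeaf [:: 2; 8; 9; 20]) (TLeaf [:: 0; 2; 5; 19])) (TNode (TLeaf [:: 2; 4; 18; 20]) (TLeaf [:: 4; 9; 12; 18]))) (TNode (TNode (TLeaf [:: 4; 11;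 15; 17]) (TLeaf [:: 8; 15; 16; 17])) (TNode (TLeaf [:: 3; 10; 14; 15]) (TLeaf [:: 0; 4; 6; 15])))) (TNode (TNode (TNode (TLeaf [:: 3; 6; 7; 12]) (TLeaf [:: 1; 4; 5; 12])) (TNode (TLeaf [:: 1; 5; 8; 11]) (TLeaf [:: 1; 4; 5; 16]))) (TNode (TNode (TLeaf [:: 0; 6; 11; 19]) (TLeaf [:: 1; 7; 11; 13])) (TNode (TLeaf [:: 1; 2; 3; 7]) (TLeaf [:: 2; 4; 5; 6]))))) (TNode (TNode (TNode (TNode (TLeaf [:: 0; 8; 15; 17]) (TLeaf [:: 0; 5; 7; 13])) (TNode (TLeaf [:: 3; 5; 10; 20]) (TLeaf [:: 6; 8; 11; 15]))) (TNode (TNode (TLeaf [:: 0; 4; 9; 18]) (TLeaf [:: 0; 4; 11; 12])) (TNode (TLeaf [:: 1; 2; 4; 15]) (TLeaf [:: 0; 4; 11; 16])))) (TNode (TNode (TNode (TLeaf [:: 0; 12; 17; 19]) (TLeaf [:: 2; 7; 13; 15])) (TNode (TLeaf [:: 0; 16; 17; 19]) (TLeaf [:: 1; 9; 10; 13]))) (TNode (TNode (TLeaf [:: 0; 8; 9; 14]) (TLeaf [:: 1; 2; 11; 19])) (TNode (TLeaf [:: 0; 1; 4; 5]) (TLeaf [:: 0; 3; 6; 7]))))))) (TNode (TNode (TNode (TNode (TNode (TNode (TLeaf [:: 0; 1; 8; 16]) (TLeaf [:: 0; 1; 4; 11])) (TNode (TLeaf [:: 0; 1; 8; 12]) (TLeaf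 [:: 3; 5; 7; 17]))) (TNode (TNode (TLeaf [:: 0; 2; 6; 8]) (TLeaf [:: 3; 5; 7; 15])) (TNode (TLeaf [:: 2; 4; 16; 17]) (TLeaf [:: 2; 8; 11; 17])))) (TNode (TNode (TNode (TLeaf [:: 0; 4; 5; 16]) (TLeaf [:: 0; 5; 8; 11])) (TNode (TLeaf [:: 0; 1; 15; 19]) (TLeaf [:: 2; 11; 16; 19]))) (TNode (TNode (TLeaf [:: 0; 1; 17; 19]) (TLeaf [:: 0; 2; 3; 7])) (TNode (TLeaf [:: 0; 7; 11; 13]) (TLeaf [:: 1; 6; 11; 19]))))) (TNode (TNode (TNode (TNode (TLeaf [:: 2; 4; 6; 11]) (TLeaf [:: 2; 6; 8; 16])) (TNode (TLeaf [:: 0; 10; 13; 14]) (TLeaf [:: 0; 2; 4; 17]))) (TNode (TNode (TLeaf [:: 1; 4; 11; 16]) (TLeaf [:: 0; 2; 4; 15])) (TNode (TLeaf [:: 1; 4; 11; 12]) (TLeaf [:: 1; 4; 9; 18])))) (TNode (TNode (TNode (TLeaf [:: 0; 9; 10; 13]) (TLeaf [:: 1; 16; 17; 19])) (TNode (TLeaf [:: 2; 3; 7; 12]) (TLeaf [:: 1; 12; 17; 19]))) (TNode (TNode (TLeaf [:: 1; 3; 6; 7]) (TLeaf [:: 0; 3; 13; 19])) (TNode (TLeaf [:: 0; 2; 11; 19]) (TLeaf [:: 1; 8; 9; 14])))))) (TNode (TNode (TNode (TNode (TNode (TLeaf [:: 0; 1; 5; 15]) (TLeaf [:: 1; 14;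 16; 20])) (TNode (TLeaf [:: 0; 4; 16; 19]) (TLeaf [:: 0; 8; 11; 19]))) (TNode (TNode (TLeaf [:: 3; 4; 7; 11]) (TLeaf [:: 1; 5; 6; 11])) (TNode (TLeaf [:: 0; 1; 5; 17]) (TLeaf [:: 2; 4; 7; 13])))) (TNode (TNode (TNode (TLeaf [:: 0; 4; 8; 15]) (TLeaf [:: 0; 11; 15; 16])) (TNode (TLeaf [:: 0; 9; 15; 18]) (TLeaf [:: 0; 11; 12; 15]))) (TNode (TNode (TLeaf [:: 0; 9; 17; 18]) (TLeaf [:: 0; 11; 12; 17])) (TNode (TLeaf [:: 0; 4; 8; 17]) (TLeaf [:: 0; 11; 16; 17]))))) (TNode (TNode (TNode (TNode (TLeaf [:: 0; 3; 7; 8]) (TLeaf [:: 1; 5; 12; 17])) (TNode (TLeaf [:: 3; 4; 9; 10]) (TLeaf [:: 0; 6; 9; 14]))) (TNode (TNode (TLeaf [:: 0; 1; 14; 20]) (TLeaf [:: 1; 5; 15; 16])) (TNode (TLeaf [:: 8; 11; 16; 19]) (TLeaf [:: 0; 3; 5; 13])))) (TNode (TNode (TNode (TLeaf [:: 1; 7; 13; 19]) (TLeaf [:: 2; 3; 13; 17])) (TNode (TLeaf [:: 2; 17; 18; 20]) (TLeaf [:: 0; 6; 12; 16]))) (TNode (TNode (TLeaf [:: 2; 15; 18; 20]) (TLeaf [:: 0; 1; 2; 16])) (TNode (TLeaf [:: 0; 1; 9; 20]) (TLeaf [:: 0; 1; 2; 12]))))))))) (TNode (TNode (TNode (TNode (TNode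 (TNode (TNode (TNode (TLeaf [:: 0; 10; 12; 20]) (TLeaf [:: 0; 2; 9; 10])) (TNode (TLeaf [:: 0; 10; 16; 20]) (TLeaf [:: 0; 1; 7; 15]))) (TNode (TNode (TLeaf [:: 0; 2; 3; 19]) (TLeaf [:: 0; 1; 7; 17])) (TNode (TLeaf [:: 1; 6; 7; 11]) (TLeaf [:: 0; 11; 13; 19])))) (TNode (TNode (TNode (TLeaf [:: 6; 8; 13; 16]) (TLeaf [:: 4; 6; 11; 13])) (TNode (TLeaf [:: 0; 4; 13; 17]) (TLeaf [:: 0; 2; 10; 14]))) (TNode (TNode (TLeaf [:: 0; 4; 13; 15]) (TLeaf [:: 5; 6; 7; 12])) (TNode (TLeaf [:: 1; 3; 4; 16]) (TLeaf [:: 1; 3; 8; 11]))))) (TNode (TNode (TNode (TNode (TLeaf [:: 1; 6; 9; 10]) (TLeaf [:: 2; 3; 16; 19])) (TNode (TLeaf [:: 1; 7; 12; 17]) (TLeaf [:: 0; 3; 5; 8]))) (TNode (TNode (TLeaf [:: 0; 3; 7; 13]) (TLeaf [:: 1; 3; 6; 19])) (TNode (TLeaf [:: 1; 7; 15; 16]) (TLeaf [:: 0; 2; 7; 11])))) (TNode (TNode (TNode (TLeaf [:: 3; 14; 19; 20]) (TLeaf [:: 4; 13; 15; 16])) (TNode (TLeaf [:: 0; 5; 6; 7]) (TLeaf [:: 0; 1; 3; 4]))) (TNode (TNode (TLeaf [:: 1; 7; 8; 19]) (TLeaf [:: 0; 6; 8; 13])) (TNode (TLeaf [:: 2; 10;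 14; 16]) (TLeaf [:: 4; 13; 16; 17])))))) (TNode (TNode (TNode (TNode (TNode (TLeaf [:: 0; 2; 6; 13]) (TLeaf [:: 1; 2; 7; 19])) (TNode (TLeaf [:: 3; 12; 16; 17]) (TLeaf [:: 0; 3; 6; 11]))) (TNode (TNode (TLeaf [:: 0; 1; 13; 16]) (TLeaf [:: 2; 11; 13; 15])) (TNode (TLeaf [:: 0; 1; 12; 13]) (TLeaf [:: 6; 7; 12; 19])))) (TNode (TNode (TNode (TLeaf [:: 4; 9; 10; 11]) (TLeaf [:: 0; 4; 7; 12])) (TNode (TLeaf [:: 0; 7; 8; 11]) (TLeaf [:: 0; 4; 7; 16]))) (TNode (TNode (TLeaf [:: 3; 8; 16; 19]) (TLeaf [:: 0; 5; 11; 13])) (TNode (TLeaf [:: 0; 2; 3; 5]) (TLeaf [:: 6; 7; 8; 15]))))) (TNode (TNode (TNode (TNode (TLeaf [:: 0; 6; 7; 19]) (TLeaf [:: 0; 3; 12; 15])) (TNode (TLeaf [:: 1; 2; 3; 11]) (TLeaf [:: 0; 3; 15; 16]))) (TNode (TNode (TLeaf [:: 3; 6; 11; 12]) (TLeaf [:: 0; 3; 16; 17])) (TNode (TLeaf [:: 0; 8; 10; 14]) (TLeaf [:: 0; 3; 12; 17])))) (TNode (TNode (TNode (TLeaf [:: 3; 5; 9; 20]) (TLeaf [:: 0; 3; 8; 19])) (TNode (TLeaf [:: 5; 11; 12; 13]) (TLeaf [:: 1; 9; 13; 14]))) (TNode (TNode (TLeaf [:: 0; 8; 9; 10]) (TLeaf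 [:: 5; 10; 19; 20])) (TNode (TLeaf [:: 0; 4; 10; 18]) (TLeaf [:: 1; 3; 5; 6]))))))) (TNode (TNode (TNode (TNode (TNode (TNode (TLeaf [:: 1; 3; 6; 11]) (TLeaf [:: 4; 5; 7; 11])) (TNode (TLeaf [:: 0; 2; 7; 19]) (TLeaf [:: 0; 1; 3; 17]))) (TNode (TNode (TLeaf [:: 2; 3; 11; 16]) (TLeaf [:: 0; 1; 3; 15])) (TNode (TLeaf [:: 2; 3; 11; 12]) (TLeaf [:: 2; 3; 9; 18])))) (TNode (TNode (TNode (TLeaf [:: 1; 4; 7; 16]) (TLeaf [:: 1; 7; 8; 11])) (TNode (TLeaf [:: 1; 4; 7; 12]) (TLeaf [:: 3; 5; 6; 12]))) (TNode (TNode (TLeaf [:: 2; 4; 6; 7]) (TLeaf [:: 1; 2; 3; 5])) (TNode (TLeaf [:: 1; 5; 11; 13]) (TLeaf [:: 4; 10; 17; 20]))))) (TNode (TNode (TNode (TNode (TLeaf [:: 0; 12; 13; 16]) (TLeaf [:: 0; 2; 3; 11])) (TNode (TLeaf [:: 1; 3; 12; 15]) (TLeaf [:: 1; 6; 7; 19]))) (TNode (TNode (TLeaf [:: 0; 13; 15; 17]) (TLeaf [:: 0; 5; 7; 8])) (TNode (TLeaf [:: 1; 3; 16; 17]) (TLeaf [:: 2; 7; 16; 19])))) (TNode (TNode (TNode (TLeaf [:: 0; 9; 13; 14]) (TLeaf [:: 3; 5; 11; 15])) (TNode (TLeaf [:: 1; 3; 8; 19]) (TLeaf [:: 2; 7;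 8; 17]))) (TNode (TNode (TLeaf [:: 0; 3; 5; 6]) (TLeaf [:: 0; 1; 4; 7])) (TNode (TLeaf [:: 7; 14; 19; 20]) (TLeaf [:: 1; 8; 9; 10])))))) (TNode (TNode (TNode (TNode (TNode (TLeaf [:: 0; 10; 15; 18]) (TLeaf [:: 1; 10; 16; 20])) (TNode (TLeaf [:: 1; 2; 9; 10]) (TLeaf [:: 1; 10; 12; 20]))) (TNode (TNode (TLeaf [:: 1; 11; 13; 19]) (TLeaf [:: 0; 6; 7; 11])) (TNode (TLeaf [:: 0; 10; 17; 18]) (TLeaf [:: 1; 2; 3; 19])))) (TNode (TNode (TNode (TLeaf [:: 0; 2; 5; 7]) (TLeaf [:: 1; 4; 13; 17])) (TNode (TLeaf [:: 7; 8; 16; 19]) (TLeaf [:: 4; 7; 11; 19]))) (TNode (TNode (TLeaf [:: 0; 3; 8; 11]) (TLeaf [:: 0; 3; 4; 16])) (TNode (TLeaf [:: 6; 10; 12; 14]) (TLeaf [:: 0; 2; 8; 13]))))) (TNode (TNode (TNode (TNode (TLeaf [:: 1; 3; 5; 8]) (TLeaf [:: 0; 7; 12; 17])) (TNode (TLeaf [:: 3; 4; 9; 14]) (TLeaf [:: 0; 6; 9; 10]))) (TNode (TNode (TLeaf [:: 0; 1; 10; 20]) (TLeaf [:: 0; 7; 15; 16])) (TNode (TLeaf [:: 0; 3; 6; 19]) (TLeaf [:: 0; 7; 12; 15])))) (TNode (TNode (TNode (TLeaf [:: 0; 5; 13; 19]) (TLeaf [:: 0; 6; 10; 14])) (TNode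 (TLeaf [:: 2; 8; 13; 16]) (TLeaf [:: 2; 4; 11; 13]))) (TNode (TNode (TLeaf [:: 10; 11; 14; 15]) (TLeaf [:: 2; 5; 7; 16])) (TNode (TLeaf [:: 1; 6; 8; 13]) (TLeaf [:: 0; 7; 8; 19])))))))) (TNode (TNode (TNode (TNode (TNode (TNode (TNode (TLeaf [:: 0; 12; 17; 20]) (TLeaf [:: 0; 2; 9; 17])) (TNode (TLeaf [:: 0; 16; 17; 20]) (TLeaf [:: 1; 15; 17; 18]))) (TNode (TNode (TLeaf [:: 0; 15; 16; 20]) (TLeaf [:: 0; 1; 7; 10])) (TNode (TLeaf [:: 0; 12; 15; 20]) (TLeaf [:: 0; 2; 9; 15])))) (TNode (TNode (TNode (TLeaf [:: 1; 5; 6; 20]) (TLeaf [:: 3; 4; 7; 20])) (TNode (TLeaf [:: 0; 4; 10; 13]) (TLeaf [:: 0; 2; 14; 17]))) (TNode (TNode (TLeaf [:: 1; 11; 14; 16]) (TLeaf [:: 0; 2; 14; 15])) (TNode (TLeaf [:: 0; 8; 19; 20]) (TLeaf [:: 1; 9; 14; 18]))))) (TNode (TNode (TNode (TNode (TLeaf [:: 0; 1; 16; 18]) (TLeaf [:: 2; 11; 15; 18])) (TNode (TLeaf [:: 0; 1; 12; 18]) (TLeaf [:: 0; 1; 9; 11]))) (TNode (TNode (TLeaf [:: 0; 2; 6; 18]) (TLeaf [:: 12; 16; 17; 20])) (TNode (TLeaf [:: 1; 6; 9; 15]) (TLeaf [:: 2; 11; 17; 18])))) (TNode (TNode (TNode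 (TLeaf [:: 0; 5; 9; 12]) (TLeaf [:: 0; 1; 11; 14])) (TNode (TLeaf [:: 0; 5; 9; 16]) (TLeaf [:: 8; 16; 19; 20]))) (TNode (TNode (TLeaf [:: 1; 6; 14; 15]) (TLeaf [:: 2; 3; 8; 10])) (TNode (TLeaf [:: 2; 14; 16; 17]) (TLeaf [:: 4; 10; 13; 16])))))) (TNode (TNode (TNode (TNode (TNode (TLeaf [:: 0; 3; 7; 18]) (TLeaf [:: 0; 4; 6; 14])) (TNode (TLeaf [:: 1; 6; 19; 20]) (TLeaf [:: 0; 7; 13; 20]))) (TNode (TNode (TLeaf [:: 0; 5; 8; 20]) (TLeaf [:: 8; 14; 15; 16])) (TNode (TLeaf [:: 2; 16; 19; 20]) (TLeaf [:: 4; 8; 18; 19])))) (TNode (TNode (TNode (TLeaf [:: 4; 9; 11; 17]) (TLeaf [:: 0; 6; 8; 18])) (TNode (TLeaf [:: 2; 8; 17; 20]) (TLeaf [:: 0; 4; 6; 9]))) (TNode (TNode (TLeaf [:: 0; 1; 4; 20]) (TLeaf [:: 4; 15; 16; 18])) (TNode (TLeaf [:: 4; 9; 11; 15]) (TLeaf [:: 1; 5; 18; 19]))))) (TNode (TNode (TNode (TNode (TLeaf [:: 0; 8; 14; 15]) (TLeaf [:: 1; 10; 13; 17])) (TNode (TLeaf [:: 0; 9; 12; 19]) (TLeaf [:: 0; 2; 19; 20]))) (TNode (TNode (TLeaf [:: 4; 6; 14; 16]) (TLeaf [:: 0; 3; 10; 16])) (TNode (TLeaf [:: 0; 8; 14;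 17]) (TLeaf [:: 0; 3; 10; 12])))) (TNode (TNode (TNode (TLeaf [:: 0; 4; 15; 18]) (TLeaf [:: 1; 4; 16; 20])) (TNode (TLeaf [:: 0; 8; 9; 15]) (TLeaf [:: 1; 4; 12; 20]))) (TNode (TNode (TLeaf [:: 0; 8; 9; 17]) (TLeaf [:: 2; 4; 6; 20])) (TNode (TLeaf [:: 0; 4; 17; 18]) (TLeaf [:: 2; 7; 13; 14]))))))) (TNode (TNode (TNode (TNode (TNode (TNode (TLeaf [:: 1; 7; 13; 20]) (TLeaf [:: 0; 6; 19; 20])) (TNode (TLeaf [:: 1; 4; 6; 14]) (TLeaf [:: 0; 1; 3; 10]))) (TNode (TNode (TLeaf [:: 2; 4; 12; 14]) (TLeaf [:: 4; 9; 14; 20])) (TNode (TLeaf [:: 0; 1; 9; 19]) (TLeaf [:: 1; 5; 8; 20])))) (TNode (TNode (TNode (TLeaf [:: 1; 4; 6; 9]) (TLeaf [:: 3; 5; 7; 9])) (TNode (TLeaf [:: 1; 6; 8; 18]) (TLeaf [:: 8; 10; 13; 19]))) (TNode (TNode (TLeaf [:: 0; 1; 14; 19]) (TLeaf [:: 2; 8; 9; 11])) (TNode (TLeaf [:: 2; 4; 9; 12]) (TLeaf [:: 2; 4; 11; 18]))))) (TNode (TNode (TNode (TNode (TLeaf [:: 1; 2; 19; 20]) (TLeaf [:: 1; 9; 12; 19])) (TNode (TLeaf [:: 0; 10; 13; 17]) (TLeaf [:: 0; 2; 4; 14]))) (TNode (TNode (TLeaf [:: 0; 10; 13; 15]) (TLeaf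 [:: 1; 8; 14; 17])) (TNode (TLeaf [:: 1; 3; 10; 16]) (TLeaf [:: 2; 6; 9; 19])))) (TNode (TNode (TNode (TLeaf [:: 0; 4; 12; 20]) (TLeaf [:: 0; 2; 4; 9])) (TNode (TLeaf [:: 0; 4; 16; 20]) (TLeaf [:: 0; 2; 8; 18]))) (TNode (TNode (TLeaf [:: 2; 5; 10; 13]) (TLeaf [:: 1; 4; 17; 18])) (TNode (TLeaf [:: 6; 8; 15; 20]) (TLeaf [:: 1; 8; 9; 17])))))) (TNode (TNode (TNode (TNode (TNode (TLeaf [:: 0; 15; 17; 18]) (TLeaf [:: 1; 16; 17; 20])) (TNode (TLeaf [:: 1; 2; 9; 17]) (TLeaf [:: 1; 12; 17; 20]))) (TNode (TNode (TLeaf [:: 0; 4; 8; 9]) (TLeaf [:: 0; 3; 13; 20])) (TNode (TLeaf [:: 0; 1; 5; 14]) (TLeaf [:: 0; 9; 11; 12])))) (TNode (TNode (TNode (TLeaf [:: 1; 2; 14; 17]) (TLeaf [:: 1; 4; 10; 13])) (TNode (TLeaf [:: 6; 8; 9; 19]) (TLeaf [:: 0; 5; 6; 20]))) (TNode (TNode (TLeaf [:: 0; 1; 5; 9]) (TLeaf [:: 0; 11; 12; 14])) (TNode (TLeaf [:: 0; 4; 8; 14]) (TLeaf [:: 0; 11; 14; 16]))))) (TNode (TNode (TNode (TNode (TLeaf [:: 2; 9; 18; 20]) (TLeaf [:: 0; 7; 10; 12])) (TNode (TLeaf [:: 0; 1; 15; 20]) (TLeaf [:: 0; 6; 9; 17])))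 (TNode (TNode (TLeaf [:: 0; 1; 17; 20]) (TLeaf [:: 0; 6; 9; 15])) (TNode (TLeaf [:: 2; 10; 13; 19]) (TLeaf [:: 1; 2; 6; 18])))) (TNode (TNode (TNode (TLeaf [:: 3; 4; 10; 17]) (TLeaf [:: 0; 6; 14; 17])) (TNode (TLeaf [:: 1; 2; 5; 20]) (TLeaf [:: 1; 5; 9; 12]))) (TNode (TNode (TLeaf [:: 5; 6; 12; 20]) (TLeaf [:: 2; 5; 6; 9])) (TNode (TLeaf [:: 3; 4; 10; 15]) (TLeaf [:: 0; 6; 14; 15])))))))))))).

Definition xorlabs (J : seq nat) := foldr (fun p acc => xorl (nth [::] labl p) acc) (nseq 11 false) J.
Fixpoint all_lists n : seq (seq bool) :=
  if n is n'.+1 then [seq b :: l | b <- [:: false; true], l <- all_lists n'] else [:: [::]].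
Definition goodJ (J : seq nat) l := [&& size J == 4, uniq J, all (fun p => p < 21) J & xorlabs J == l].
Lemma tbl_ok : all (fun l => goodJ (lookup tbl l) l) (all_lists 11).
Proof. vm_compute. reflexivity. Qed.
Lemma labl_ok : [&& size labl == 21, all (fun x => size x == 11) labl, uniq labl & all (has id) labl].
Proof. vm_compute. reflexivity. Qed.

Lemma all_listsP n l : size l = n -> l \in all_lists n.
Proof.
elim: n l => [|n IH] [|b l] //= [Hs].
rewrite !mem_cat; case: b; apply/orP; [right; apply/orP; left|left]; apply/mapP; exists l => //; exact: IH.
Qed.

Lemma pr2 : prime 2. Proof. by []. Qed.
Definition F0sig := @pPrimePowerField 2 5 pr2 isT.
Definition F0 : finFieldType := s2val F0sig.
Lemma charF0 : (2 \in [pchar F0]%R)%N. Proof. exact: (s2valP F0sig). Qed.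
Lemma cardF0 : #|F0| = 32%N. Proof. exact: (s2valP' F0sig). Qed.
Definition F := pPrimeCharType charF0.
Import VectorInternalTheory.
Lemma dimF : dim F = 5%N.
Proof. rewrite -dimvf pprimeChar_dimf. rewrite cardF0. by []. Qed.
Lemma cardF : #|F| = 32%N. Proof. exact: cardF0. Qed.
Definition cd (x : F) : 'rV['F_2]_5 := castmx (erefl 1%N, dimF) (v2r x).
Definition dc (r : 'rV['F_2]_5) : F := r2v (castmx (erefl 1%N, esym dimF) r).
Lemma cdK : cancel cd dc.
Proof. move=> x; rewrite /cd /dc (castmxK (erefl 1%N) dimF). exact: v2rK. Qed.
Lemma dcK : cancel dc cd.
Proof. move=> r; rewrite /cd /dc r2vK. exact: (castmxKV (erefl 1%N) dimF). Qed.
Lemma v2rD (x y : F) : v2r (x + y)%R = (v2r x + v2r y)%R.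
Proof. exact: raddfD. Qed.
Lemma cdD (x y : F) : cd (x + y)%R = (cd x + cd y)%R.
Proof. by apply/matrixP=> i j; rewrite /cd !castmxE v2rD !mxE !castmxE. Qed.
Lemma cd0 : cd 0%R = 0%R.
Proof. apply/matrixP=> i j; rewrite /cd !castmxE raddf0 !mxE //. Qed.
Lemma cd_sum (I : Type) (r : seq I) (P : pred I) (f : I -> F) :
  cd (\sum_(i <- r | P i) f i)%R = (\sum_(i <- r | P i) cd (f i))%R.
Proof. exact: (big_morph cd cdD cd0). Qed.
Lemma cd_inj : injective cd. Proof. exact: can_inj cdK. Qed.

Local Open Scope ring_scope.
Lemma F2_cases (x : 'F_2) : x = 0 \/ x = 1.
Proof. case: x => [[|[|k]] Hk]; [left|right|]; try exact: val_inj. by []. Qed.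
Lemma F2_11 : (1 : 'F_2) + 1 = 0. Proof. exact: val_inj. Qed.
Lemma F2_xx (x : 'F_2) : x + x = 0.
Proof. by case: (F2_cases x) => ->; rewrite ?addr0 ?F2_11. Qed.
Definition bF (b : bool) : 'F_2 := if b then 1 else 0.
Lemma bF_xor a b : bF (a (+) b) = bF a + bF b.
Proof. by case: a; case: b; rewrite /= ?addr0 ?add0r ?F2_11. Qed.
Lemma bF_eq1 (x : 'F_2) : bF (x == 1) = x.
Proof. by case: (F2_cases x) => ->. Qed.

Definition alpha (p : nat) : F := nth 0 (enum F) p.
Lemma size_enumF : size (enum F) = 32%N.
Proof. by rewrite -cardE cardF. Qed.
Lemma alpha_inj p q : (p < 32)%N -> (q < 32)%N -> alpha p = alpha q -> p = q.
Proof.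
move=> Hp Hq E; apply/eqP; rewrite -(nth_uniq 0 (s:=enum F)) ?size_enumF ?enum_uniq //.
by apply/eqP.
Qed.
Lemma alpha_index x : alpha (index x (enum F)) = x.
Proof. by rewrite /alpha nth_index // mem_enum. Qed.
Lemma index_lt x : (index x (enum F) < 32)%N.
Proof. by rewrite -size_enumF index_mem mem_enum. Qed.

Definition lab (p i : nat) : bool := nth false (nth [::] labl p) i.

Definition Hf (i j : nat) : 'F_2 :=
  if (j < 672)%N then
    if (i < 11)%N then bF (lab (j %/ 32) i)
    else cd (alpha (j %% 32) * alpha (j %/ 32) ^+ ((i - 11) %/ 5)) 0 (inord ((i - 11) %% 5))
  else if (i < 11)%N then 0
  else cd ((alpha (j - 672) + alpha 20) * alpha 0 ^+ ((i - 11) %/ 5)) 0 (inord ((i - 11) %% 5)).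

Definition Hm : 'M['F_2]_(31, 690) := \matrix_(i, j) Hf i j.

Lemma xorlabs_nth J i : (i < 11)%N ->
  bF (nth false (xorlabs J) i) = \sum_(p <- J) bF (lab p i).
Proof.
move=> Hi; elim: J => [|p J IH]; first by rewrite big_nil nth_nseq if_same.
by rewrite big_cons /= /xorl nth_mkseq // bF_xor IH.
Qed.

Lemma sum_enum4 (f : 'I_4 -> 'F_2) : \sum_(k <- enum 'I_4) f k = \sum_(k < 4) f k.
Proof. by rewrite big_enum. Qed.

Lemma sum_J (f : nat -> 'F_2) (J : seq nat) : size J = 4%N ->
  \sum_(p <- J) f p = \sum_(k < 4) f (nth 0%N J k).
Proof. by move=> sJ; rewrite (big_nth 0%N) sJ big_mkord. Qed.

Lemma cover (s : 'cV['F_2]_31) : sum_of_at_most Hm 4 s.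
Proof.
set l := [seq s (inord i) 0 == 1 | i <- iota 0 11].
have Hl : size l = 11%N by rewrite size_map size_iota.
have /allP/(_ l (all_listsP Hl)) := tbl_ok.
set J := lookup tbl l.
case/and4P => /eqP sJ uJ /allP aJ /eqP xJ.
have J21 (k : 'I_4) : (nth 0%N J k < 21)%N by apply: aJ; rewrite mem_nth ?sJ.
pose a : 'rV[F]_4 := \row_(k < 4) alpha (nth 0%N J k).
pose V := Vandermonde 4 a.
have VU : V \in unitmx.
  rewrite unitmxE det_Vandermonde unitfE; apply/prodf_neq0 => i _.
  apply/prodf_neq0 => j ij; rewrite !mxE subr_eq0; apply/eqP.
  move/alpha_inj; rewrite !(leq_trans (J21 _)) // => /(_ isT isT) /eqP.
  rewrite nth_uniq ?sJ // => /eqP /val_inj ji; by rewrite ji ltnn in ij.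
pose tv : 'cV[F]_4 := \col_(c < 4) dc (\row_(b < 5) s (inord (11 + 5 * c + b)) 0).
pose be := invmx V *m tv.
have Vbe : V *m be = tv by rewrite /be mulKVmx.
pose jk (k : 'I_4) := (nth 0%N J k * 32 + index (be k ord0) (enum F))%N.
have jk_lt k : (jk k < 672)%N.
  have aux : forall x y, (x < 32 -> y < 21 -> y * 32 + x < 672)%N by move=> x y; lia.
  exact: aux (index_lt _) (J21 k).
have jk_div k : (jk k %/ 32 = nth 0%N J k)%N.
  by rewrite /jk divnMDl // divn_small ?addn0 ?index_lt.
have jk_mod k : (jk k %% 32 = index (be k ord0) (enum F))%N.
  by rewrite /jk modnMDl modn_small ?index_lt.
pose js := [seq (inord (jk k) : 'I_690) | k <- enum 'I_4].
exists [set j in js]; split.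
  by rewrite cardsE (leq_trans (card_size _)) // size_map size_enum_ord.
have ujs : uniq js.
  rewrite map_inj_uniq ?enum_uniq // => k k' /(congr1 val) /=.
  rewrite !inordK ?(leq_trans (jk_lt _)) // => E.
  have := congr1 (divn^~ 32%N) E; rewrite !jk_div => /eqP.
  rewrite nth_uniq ?sJ // => /eqP; exact: val_inj.
apply/matrixP => i z; rewrite (ord1 z) {z}.
rewrite (eq_bigl (fun j => j \in js)); last by move=> j; rewrite inE.
rewrite -big_uniq // summxE big_map sum_enum4.
rewrite (eq_bigr (fun k : 'I_4 => Hf i (jk k))); last first.
  by move=> k _; rewrite !mxE inordK // (leq_trans (jk_lt _)).
case: (ltnP i 11) => Hi.
  rewrite (eq_bigr (fun k : 'I_4 => bF (lab (nth 0%N J k) i))); last first.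
    by move=> k _; rewrite /Hf jk_lt Hi jk_div.
  rewrite -(sum_J (fun p => bF (lab p i)) sJ) -xorlabs_nth //.
  rewrite xJ /l (nth_map 0%N) ?size_iota // nth_iota // add0n.
  by rewrite bF_eq1 inord_val.
set c := ((i - 11) %/ 5)%N; set b := ((i - 11) %% 5)%N.
have Hi' : (i < 11)%N = false by rewrite ltnNge Hi.
rewrite (eq_bigr (fun k : 'I_4 => cd (be k ord0 * alpha (nth 0%N J k) ^+ c) 0 (inord b))); last first.
  by move=> k _; rewrite /Hf jk_lt Hi' jk_mod jk_div alpha_index.
rewrite -summxE -cd_sum.
have Hc : (c < 4)%N by rewrite /c ltn_divLR //; have := ltn_ord i; lia.
have -> : \sum_(k < 4) be k ord0 * alpha (nth 0%N J k) ^+ c = tv (inord c) 0.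
  rewrite -Vbe mxE.
  by apply: eq_bigr => k _; rewrite !mxE inordK // mulrC.
rewrite mxE dcK mxE; congr (s _ 0); apply: val_inj => /=.
rewrite !inordK // ?/b ?ltn_mod //.
  have := divn_eq (i - 11) 5; rewrite -/c -/b; lia.
have := divn_eq (i - 11) 5; rewrite -/c -/b; have := ltn_ord i; lia.
Qed.

Definition ind (S : {set 'I_690}) : 'cV['F_2]_690 := \col_j ((j \in S)%:R).

Lemma mul_ind S : Hm *m ind S = \sum_(j in S) col j Hm.
Proof.
apply/matrixP => k z; rewrite (ord1 z) {z} !mxE summxE [RHS]big_mkcond /=.
apply: eq_bigr => j _; rewrite !mxE; case: (j \in S); by rewrite ?mulr1 ?mulr0.
Qed.

Lemma supp_ind S : [set j | ind S j 0 != 0] = S.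
Proof. by apply/setP => j; rewrite !inE mxE; case: (j \in S); rewrite ?oner_eq0 ?eqxx. Qed.

Lemma ind_supp (c : 'cV['F_2]_690) : c = ind [set j | c j 0 != 0].
Proof.
apply/matrixP => j z; rewrite (ord1 z) {z} !mxE inE.
by case: (F2_cases (c j 0)) => ->; rewrite ?eqxx ?oner_eq0.
Qed.

Lemma ffact_le_exp n k : (n ^_ k <= n ^ k)%N.
Proof.
elim: k => [|k IH]; first by rewrite ffactn0.
by rewrite ffactnSr expnSr leq_mul // leq_subr.
Qed.

Lemma bin_le_exp n k : ('C(n, k) <= n ^ k)%N.
Proof.
apply: leq_trans (ffact_le_exp n k); rewrite -bin_ffact.
exact: leq_pmulr (fact_gt0 k).
Qed.

Lemma cover_min R' : (forall s, sum_of_at_most Hm R' s) -> (4 <= R')%N.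
Proof.
move=> HR; rewrite leqNgt; apply/negP => HR3.
pose P := [set S : {set 'I_690} | (#|S| <= 3)%N].
pose f (S : {set 'I_690}) := \sum_(j in S) col j Hm.
have sub : [set: 'cV['F_2]_31] \subset f @: P.
  apply/subsetP => s _; have [S [HS ->]] := HR s; apply/imsetP; exists S => //.
  by rewrite inE (leq_trans HS) // -ltnS.
have := leq_trans (subset_leq_card sub) (leq_imset_card f P).
rewrite cardsT card_mx card_Fp //.
pose A (k : nat) := [set S : {set 'I_690} | #|S| == k].
have subP : P \subset A 0%N :|: A 1%N :|: A 2%N :|: A 3%N.
  apply/subsetP => S; rewrite !inE; case: #|S| => [|[|[|[|k]]]] //.
have cA k : #|A k| = 'C(690, k) by rewrite /A card_draws card_ord.
have := subset_leq_card subP.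
have U1 := (leq_card_setU (A 0%N :|: A 1%N :|: A 2%N) (A 3%N)).1.
have U2 := (leq_card_setU (A 0%N :|: A 1%N) (A 2%N)).1.
have U3 := (leq_card_setU (A 0%N) (A 1%N)).1.
have b0 := bin_le_exp 690 0; have b1 := bin_le_exp 690 1.
have b2 := bin_le_exp 690 2; have b3 := bin_le_exp 690 3.
rewrite !cA in U1 U2 U3.
move: b0 b1 b2 b3 U1 U2 U3.
move: #|P| #|A 0%N :|: A 1%N :|: A 2%N :|: A 3%N| #|A 0%N :|: A 1%N :|: A 2%N| #|A 0%N :|: A 1%N|.
move: 'C(690, 0) 'C(690, 1) 'C(690, 2) 'C(690, 3).
move=> *; lia.
Qed.

Lemma rankH : \rank Hm = 31%N.
Proof.
pose Sel (i : 'I_31) := odflt set0 [pick S : {set 'I_690} | (#|S| <= 4)%N && (delta_mx i 0 == \sum_(j in S) col j Hm)].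
have SelP i : delta_mx i 0 = \sum_(j in Sel i) col j Hm.
  rewrite /Sel; case: pickP => [S /andP [_ /eqP] //|].
  have [S [HS E]] := cover (delta_mx i 0) => /(_ S).
  by rewrite HS E eqxx.
pose C : 'M['F_2]_(690, 31) := \matrix_(j, i) ind (Sel i) j 0.
have HC : Hm *m C = 1%:M.
  apply/matrixP => k i.
  have E : (delta_mx i 0 : 'cV['F_2]_31) k 0 = (\sum_(j in Sel i) col j Hm) k 0 by rewrite -SelP.
  rewrite -mul_ind mxE in E.
  rewrite eqxx andbT in E.
  rewrite [RHS]mxE.
  rewrite E !mxE.
  by apply: eq_bigr => j _; rewrite !mxE.
have : row_full Hm^T.
  apply/row_fullP; exists C^T; by rewrite -trmx_mul HC trmx1.
by rewrite /row_full mxrank_tr => /eqP.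
Qed.

Lemma charF : (2 \in [pchar F])%N. Proof. exact: charF0. Qed.

Lemma Hcol (j : 'I_690) (i : 'I_31) : col j Hm i 0 = Hf i j.
Proof. by rewrite !mxE. Qed.

Lemma Hf_top (i j : nat) : (i < 11)%N -> Hf i j = if (j < 672)%N then bF (lab (j %/ 32) i) else 0.
Proof. by move=> Hi; rewrite /Hf Hi; case: ifP. Qed.

Lemma Hf_blk0 (b j : nat) : (b < 5)%N -> Hf (11 + b) j =
  cd (if (j < 672)%N then alpha (j %% 32) else alpha (j - 672) + alpha 20) 0 (inord b).
Proof.
move=> Hb; have e1 : (11 + b < 11)%N = false by rewrite ltnNge leq_addr.
have e2 : (11 + b - 11)%N = b by rewrite addKn.
by rewrite /Hf e1 e2 (divn_small Hb) (modn_small Hb) expr0 !mulr1; case: ifP.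
Qed.

Lemma labl_facts : [/\ size labl = 21%N, forall x, x \in labl -> size x = 11%N,
   uniq labl & forall x, x \in labl -> has id x].
Proof.
case/and4P: labl_ok => /eqP s21 /allP sz u /allP hs; split => // x /sz /eqP //.
Qed.

Lemma lab_nz p : (p < 21)%N -> exists2 i, (i < 11)%N & lab p i.
Proof.
move=> Hp; case: labl_facts => s21 sz _ hs.
have Hin : nth [::] labl p \in labl by rewrite mem_nth ?s21.
have [x Hx /= Ex] := hasP (hs _ Hin).
have Ht : true \in nth [::] labl p by rewrite -Ex.
exists (index true (nth [::] labl p)); last by rewrite /lab nth_index.
by rewrite -(sz _ Hin) index_mem.
Qed.

Lemma lab_inj p q : (p < 21)%N -> (q < 21)%N -> (forall i, (i < 11)%N -> lab p i = lab q i) -> p = q.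
Proof.
move=> Hp Hq E; case: labl_facts => s21 sz u _.
have Hinp : nth [::] labl p \in labl by rewrite mem_nth ?s21.
have Hinq : nth [::] labl q \in labl by rewrite mem_nth ?s21.
have : nth [::] labl p = nth [::] labl q.
  apply: (eq_from_nth (x0 := false)); first by rewrite !sz.
  by move=> i; rewrite sz // => /E.
by move/eqP; rewrite nth_uniq ?s21 // => /eqP.
Qed.

Lemma bF_inj : injective bF.
Proof. by case; case => //= /eqP; rewrite ?oner_eq0 // eq_sym oner_eq0. Qed.

Lemma alpha_neq20 k : (k < 20)%N -> alpha k + alpha 20 != 0.
Proof.
move=> Hk; rewrite addr_eq0 (oppr_pchar2 charF); apply/eqP => /alpha_inj.
by move=> /(_ (leq_trans Hk (isT : 20 <= 32)%N) isT) E; rewrite E in Hk.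
Qed.

Lemma cd_neq0 x : x != 0 -> exists b : 'I_5, cd x 0 b != 0.
Proof.
move=> nx; case: (pickP (fun b : 'I_5 => cd x 0 b != 0)) => [b Hb|H]; first by exists b.
case/negP: nx; apply/eqP; apply: cd_inj; rewrite cd0; apply/matrixP => r b.
by rewrite (ord1 r) mxE; move: (H b) => /negbFE/eqP.
Qed.

Lemma col_ent (j : 'I_690) i : (i < 31)%N -> col j Hm (inord i) 0 = Hf i j.
Proof. by move=> Hi; rewrite Hcol inordK. Qed.

Lemma col_nz (j : 'I_690) : col j Hm != 0.
Proof.
apply/negP => /eqP E.
have Ej i : (i < 31)%N -> Hf i j = 0 by move=> Hi; rewrite -col_ent // E mxE.
case: (ltnP j 672) => Hj.
  have Hp : (j %/ 32 < 21)%N by rewrite ltn_divLR.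
  have [i Hi Hl] := lab_nz Hp.
  have := Ej i (leq_trans Hi (isT : 11 <= 31)%N); rewrite Hf_top // Hj Hl /=.
  by move/eqP; rewrite oner_eq0.
have Hk : (j - 672 < 20)%N by have := ltn_ord j; lia.
have [b Hb] := cd_neq0 (alpha_neq20 Hk).
have := Ej (11 + b)%N (_ : 11 + b < 31)%N; rewrite ?ltn_add2l ?(leq_trans (ltn_ord b)) //.
move=> /(_ isT).
rewrite Hf_blk0 // ltnNge Hj /= inord_val => E'; by rewrite E' eqxx in Hb.
Qed.

Lemma col_inj (j j' : 'I_690) : col j Hm = col j' Hm -> j = j'.
Proof.
move=> E.
have Ej i : (i < 31)%N -> Hf i j = Hf i j' by move=> Hi; rewrite -!col_ent // E.
have blk (x y : F) : (forall b, (b < 5)%N -> cd x 0 (inord b) = cd y 0 (inord b)) -> x = y.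
  move=> H; apply: cd_inj; apply/matrixP => r b; rewrite (ord1 r) -(inord_val b).
  exact: H.
have top p i : (p < 672)%N -> (i < 11)%N -> Hf i p = bF (lab (p %/ 32) i) by move=> Hp Hi; rewrite Hf_top // Hp.
case: (ltnP j 672) => Hj; case: (ltnP j' 672) => Hj'.
- have Hp : (j %/ 32 < 21)%N by rewrite ltn_divLR.
  have Hp' : (j' %/ 32 < 21)%N by rewrite ltn_divLR.
  have Ep : (j %/ 32 = j' %/ 32)%N.
    apply: lab_inj => // i Hi; apply: bF_inj; rewrite -!top //; exact: Ej (leq_trans Hi (isT : 11 <= 31)%N).
  have Ee : (j %% 32 = j' %% 32)%N.
    apply: alpha_inj; rewrite ?ltn_mod //; apply: blk => b Hb.
    have := Ej (11 + b)%N (_ : 11 + b < 31)%N; rewrite ?ltn_add2l ?(leq_trans Hb) //; move=> /(_ isT); by rewrite !Hf_blk0 // Hj Hj'.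
  by apply: val_inj; rewrite /= (divn_eq j 32) (divn_eq j' 32) Ep Ee.
- have Hp : (j %/ 32 < 21)%N by rewrite ltn_divLR.
  have [i Hi Hl] := lab_nz Hp.
  have := Ej i (leq_trans Hi (isT : 11 <= 31)%N); rewrite !Hf_top // Hj ltnNge Hj' Hl /=.
  by move/eqP; rewrite oner_eq0.
- have Hp : (j' %/ 32 < 21)%N by rewrite ltn_divLR.
  have [i Hi Hl] := lab_nz Hp.
  have := Ej i (leq_trans Hi (isT : 11 <= 31)%N); rewrite !Hf_top // Hj' ltnNge Hj Hl /=.
  by move/eqP; rewrite eq_sym oner_eq0.
- have Ek : (j - 672 = j' - 672)%N.
    apply: alpha_inj; [by have := ltn_ord j; lia | by have := ltn_ord j'; lia |].
    apply: (addIr (alpha 20)); apply: blk => b Hb.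
    have := Ej (11 + b)%N (_ : 11 + b < 31)%N; rewrite ?ltn_add2l ?(leq_trans Hb) //; move=> /(_ isT); by rewrite !Hf_blk0 // ltnNge Hj ltnNge Hj'.
  apply: val_inj => /=; move: Ek Hj Hj'; lia.
Qed.

Lemma mat_F2_sum0 m n (A B : 'M['F_2]_(m, n)) : A + B = 0 -> A = B.
Proof.
move=> E; apply/matrixP => i k.
have := congr1 (fun M : 'M['F_2]_(m, n) => M i k) E; rewrite /= !mxE => E'.
by rewrite -[A i k]addr0 -(F2_xx (B i k)) addrA E' add0r.
Qed.

Lemma mind_lb (c : 'cV['F_2]_690) : Hm *m c = 0 -> c != 0 -> (3 <= wt c)%N.
Proof.
move=> Hc nc; rewrite /wt; set S := [set j | c j 0 != 0].
have Ec := ind_supp c; rewrite -/S in Ec.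
rewrite Ec mul_ind in Hc.
rewrite leqNgt; apply/negP => HS.
case E: #|S| HS => [|[|[|n]]] // _.
- move/cards0_eq: E => S0; case/negP: nc; apply/eqP; rewrite Ec S0.
  by apply/matrixP => j r; rewrite !mxE in_set0.
- move/eqP/cards1P: E => [j Sj]; rewrite Sj big_set1 in Hc.
  by move: (col_nz j); rewrite Hc eqxx.
- move/eqP/cards2P: E => [x [y [xy Sxy]]].
  rewrite Sxy big_setU1 /= ?inE // big_set1 in Hc.
  by move/mat_F2_sum0/col_inj: Hc => exy; rewrite exy eqxx in xy.
Qed.

Lemma mind_ex : exists c : 'cV['F_2]_690, Hm *m c = 0 /\ c != 0 /\ wt c = 3%N.
Proof.
pose d0 := alpha 0 + alpha 20.
have d0n : d0 != 0 by exact: alpha_neq20.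
pose v1 := index 0 (enum F); pose v2 := index d0 (enum F).
have v1l : (v1 < 32)%N := index_lt _.
have v2l : (v2 < 32)%N := index_lt _.
pose j1 : 'I_690 := inord v1; pose j2 : 'I_690 := inord v2; pose j3 : 'I_690 := inord 672.
have e1 : (j1 : nat) = v1 by rewrite inordK // (ltn_trans v1l).
have e2 : (j2 : nat) = v2 by rewrite inordK // (ltn_trans v2l).
have e3 : (j3 : nat) = 672%N by rewrite inordK.
have n12 : j1 != j2.
  apply/eqP => /(congr1 val); rewrite /= e1 e2 => E.
  by move: d0n; rewrite -(alpha_index d0) -/v2 -E alpha_index eqxx.
have n13 : j1 != j3 by apply/eqP => /(congr1 val); rewrite /= e1 e3 => E; rewrite E in v1l.
have n23 : j2 != j3 by apply/eqP => /(congr1 val); rewrite /= e2 e3 => E; rewrite E in v2l.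
pose S := j1 |: (j2 |: [set j3]).
have cS : #|S| = 3%N.
  by rewrite /S cardsU1 !inE negb_or n12 n13 cardsU1 !inE n23 cards1.
exists (ind S); split; last split.
- rewrite mul_ind /S big_setU1 /= ?inE ?negb_or ?n12 ?n13 //.
  rewrite big_setU1 /= ?inE ?n23 // big_set1.
  apply/matrixP => i r; rewrite (ord1 r) !mxE.
  rewrite e1 e2 e3.
  case: (ltnP i 11) => Hi.
    have v1L : (v1 < 672)%N by apply: (ltn_trans v1l).
    have v2L : (v2 < 672)%N by apply: (ltn_trans v2l).
    rewrite !Hf_top // v1L v2L ltnn (divn_small v1l) (divn_small v2l).
    by rewrite addr0 F2_xx.
  have Hi' : (i < 11)%N = false by rewrite ltnNge Hi.
  have v1L : (v1 < 672)%N by apply: (ltn_trans v1l).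
  have v2L : (v2 < 672)%N by apply: (ltn_trans v2l).
  rewrite /Hf v1L v2L ltnn Hi' (modn_small v1l) (modn_small v2l) (divn_small v1l) (divn_small v2l) subnn.
  rewrite /v1 /v2 !alpha_index mul0r cd0 mxE add0r.
  by rewrite -/d0 F2_xx.
- apply/negP => /eqP E; move: cS; rewrite -(supp_ind S) E.
  suff -> : [set j | (0 : 'cV['F_2]_690) j 0 != 0] = set0 by rewrite cards0.
  by apply/setP => j; rewrite !inE mxE eqxx.
- by rewrite /wt supp_ind.
Qed.

Local Close Scope ring_scope.

Theorem theorem9p2 :
  exists H : 'M['F_2]_(31, 690),
    \rank H = 31 /\ min_dist H 3 /\ covering_radius H 4.
Proof.
exists Hm; split; first exact: rankH.
split; first by split; [exact: mind_ex | exact: mind_lb].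
by split; [exact: cover | exact: cover_min].
Qed.
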